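(* Let $r\colon \mathbb{N}_0 \to \{\pm 1\}$ be the Rudin-Shapiro sequence. For every $s \in \mathbb{N}$ there exists $c = c(s) > 0$ such that $\|r\|_{U^s[N]} = O(N^{-c})$ as $N \to \infty$.
   Context: The Rudin-Shapiro sequence is $r(n) = (-1)^{f_{11}(n)}$, where $f_{11}(n)$ is the number of (possibly overlapping) occurrences of the block $11$ in the binary expansion of $n$; equivalently $r(0)=1$, $r(2n)=r(n)$, $r(4n+1)=r(n)$, $r(4n+3)=-r(2n+1)$. For $N \in \mathbb{N}$ write $[N] = \{0,1,\dots,N-1\}$. For $s\in\mathbb{N}$ and $f\colon [N]\to\mathbb{R}$, the Gowers uniformity norm is defined by $\|f\|_{U^s[N]}^{2^s} = \mathbb{E}_{n,\mathbf h} \prod_{\omega\in\{0,1\}^s} f(n+\omega\cdot \mathbf h)$, where $\omega\cdot\mathbf h = \sum_{i=1}^s \omega_i h_i$ and the expectation is over all $n\in\mathbb{Z}$, $\mathbf h\in\mathbb{Z}^s$ such that the cube $\{n+\omega\cdot\mathbf h : \omega\in\{0,1\}^s\}$ is contained in $[N]$. Here $\|r\|_{U^s[N]}$ means the norm of the restriction of $r$ to $[N]$. *)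

(* Defs.v *)
From Stdlib Require Import Reals ZArith Arith List Bool.
Import ListNotations.
Open Scope R_scope.

Definition f11 (n : nat) : nat :=
  List.length (List.filter (fun i => Nat.testbit n i && Nat.testbit n (S i))
                           (List.seq 0 (S (Nat.log2 n)))).

Definition rudin_shapiro (n : nat) : R := (-1) ^ (f11 n).

Fixpoint cube_vertices (s : nat) : list (list bool) :=
  match s with
  | O => [ [] ]
  | S k => map (cons false) (cube_vertices k) ++ map (cons true) (cube_vertices k)
  end.

Definition zrange (lo : Z) (len : nat) : list Z :=
  map (fun k => (lo + Z.of_nat k)%Z) (List.seq 0 len).

Fixpoint zbox (s : nat) (lo : Z) (len : nat) : list (list Z) :=
  match s with
  | O => [ [] ]
  | S k => flat_map (fun x => map (cons x) (zbox k lo len)) (zrange lo len)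
  end.

Fixpoint wdot (w : list bool) (h : list Z) : Z :=
  match w, h with
  | b :: w', x :: h' => ((if b then x else 0) + wdot w' h')%Z
  | _, _ => 0%Z
  end.

Definition in_interval (N : nat) (x : Z) : bool :=
  ((0 <=? x) && (x <? Z.of_nat N))%Z.

Definition cube_in (s N : nat) (n : Z) (h : list Z) : bool :=
  forallb (fun w => in_interval N (n + wdot w h)) (cube_vertices s).

(* All (n, h) in Z x Z^s whose cube lies in [N].  Such n lie in [0, N) and
   every h_i lies in (-N, N) (since n and n + h_i are in [N]), so the
   enumeration below is exhaustive. *)
Definition gowers_configs (s N : nat) : list (Z * list Z) :=
  filter (fun p => cube_in s N (fst p) (snd p))
    (list_prod (zrange 0 N) (zbox s (1 - Z.of_nat N)%Z (2 * N - 1))).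

Definition cube_product (s : nat) (f : Z -> R) (n : Z) (h : list Z) : R :=
  fold_right Rmult 1 (map (fun w => f (n + wdot w h)%Z) (cube_vertices s)).

(* ||f||_{U^s[N]}^{2^s} = E_{n,h} prod_omega f(n + omega.h) *)
Definition gowers_avg (s N : nat) (f : Z -> R) : R :=
  fold_right Rplus 0
    (map (fun p => cube_product s f (fst p) (snd p)) (gowers_configs s N))
  / INR (length (gowers_configs s N)).

(* ||f||_{U^s[N]}: the nonnegative 2^s-th root (the average is always >= 0). *)
Definition gowers_norm (s N : nat) (f : Z -> R) : R :=
  let a := gowers_avg s N f in
  if Rle_dec a 0 then 0 else Rpower a (/ (2 ^ s)).

(* r viewed on Z (only its values on [N] enter the norm). *)
Definition rsZ (x : Z) : R := rudin_shapiro (Z.to_nat x).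

(* Main.v *)
Require Import Defs.
From Stdlib Require Import Reals ZArith Arith List Bool Lia Lra Psatz FunctionalExtensionality.
Import ListNotations.
Open Scope R_scope.

Definition cntb (n K : nat) : nat :=
  length (filter (fun i => Nat.testbit n i && Nat.testbit n (S i)) (seq 0 K)).

Lemma filter_false_len {A} (P : A -> bool) l :
  (forall x, In x l -> P x = false) -> length (filter P l) = 0%nat.
Proof.
  induction l as [|a l IH]; simpl; intros H; auto.
  rewrite H by auto. apply IH; auto.
Qed.

Lemma filter_cons' {A} (P : A -> bool) a l :
  filter P (a :: l) = if P a then a :: filter P l else filter P l.
Proof. reflexivity. Qed.

Lemma f11_cnt n K : (S (Nat.log2 n) <= K)%nat -> f11 n = cntb n K.
Proof.
  intros HK. unfold f11, cntb.
  replace K with (S (Nat.log2 n) + (K - S (Nat.log2 n)))%nat by lia.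
  rewrite seq_app, filter_app, length_app.
  rewrite (filter_false_len _ (seq (0 + S (Nat.log2 n)) _)). lia.
  intros x Hx. apply in_seq in Hx.
  rewrite (Nat.bits_above_log2 n x) by lia. reflexivity.
Qed.

Lemma f11_step m j : (j < 2)%nat ->
  f11 (2 * m + j) = ((if Nat.odd j && Nat.odd m then 1 else 0) + f11 m)%nat.
Proof.
  intros Hj.
  assert (Hl1 : (S (Nat.log2 m) <= 2*m+j+1)%nat).
  { pose proof (Nat.log2_le_lin m). lia. }
  assert (Hl2 : (S (Nat.log2 (2*m+j)) <= S (2*m+j+1))%nat).
  { pose proof (Nat.log2_le_lin (2*m+j)). lia. }
  rewrite (f11_cnt _ _ Hl2), (f11_cnt _ _ Hl1). unfold cntb.
  change (seq 0 (S (2*m+j+1))) with (0%nat :: seq 1 (2*m+j+1)).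
  rewrite <- (seq_shift (2*m+j+1) 0).
  rewrite filter_cons'.
  assert (Hb : forall i, Nat.testbit (2*m+j) (S i) = Nat.testbit m i).
  { intros i. rewrite <- Nat.div2_bits. f_equal. symmetry. apply Nat.div_unique with j; lia. }
  assert (E0 : Nat.testbit (2 * m + j) 0 && Nat.testbit (2 * m + j) 1 = Nat.odd j && Nat.odd m).
  { rewrite Nat.bit0_odd. rewrite <- Nat.div2_bits.
    replace ((2*m+j)/2)%nat with m.
    2:{ apply Nat.div_unique with j; lia. }
    rewrite Nat.bit0_odd. f_equal.
    rewrite Nat.odd_add. rewrite Nat.odd_mul. simpl. reflexivity. }
  rewrite E0.
  assert (Hf : filter (fun i => Nat.testbit (2 * m + j) i && Nat.testbit (2 * m + j) (S i))
      (map S (seq 0 (2 * m + j + 1))) =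
      map S (filter (fun i => Nat.testbit m i && Nat.testbit m (S i)) (seq 0 (2 * m + j + 1)))).
  { induction (seq 0 (2*m+j+1)) as [|a l IH]; auto.
    rewrite map_cons, !filter_cons', !Hb.
    destruct (Nat.testbit m a && Nat.testbit m (S a)); rewrite IH; reflexivity. }
  rewrite Hf.
  destruct (Nat.odd j && Nat.odd m); simpl; rewrite length_map; lia.
Qed.

Lemma rs_step m j : (j < 2)%nat ->
  rudin_shapiro (2 * m + j) = (if Nat.odd j && Nat.odd m then -1 else 1) * rudin_shapiro m.
Proof.
  intros Hj. unfold rudin_shapiro. rewrite f11_step by auto.
  destruct (Nat.odd j && Nat.odd m); simpl; ring.
Qed.

Definition sumR {A} (l : list A) (f : A -> R) : R := fold_right Rplus 0 (map f l).
Definition prodR {A} (l : list A) (f : A -> R) : R := fold_right Rmult 1 (map f l).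

Lemma sumR_nil {A} (f : A -> R) : sumR [] f = 0. Proof. reflexivity. Qed.
Lemma sumR_cons {A} (f : A -> R) a l : sumR (a :: l) f = f a + sumR l f.
Proof. reflexivity. Qed.
Lemma sumR_app {A} (f : A -> R) l1 l2 : sumR (l1 ++ l2) f = sumR l1 f + sumR l2 f.
Proof. induction l1 as [|a l1 IH]; [unfold sumR; simpl; ring|]. simpl app. rewrite !sumR_cons, IH. ring. Qed.
Lemma sumR_ext {A} (f g : A -> R) l : (forall x, In x l -> f x = g x) -> sumR l f = sumR l g.
Proof.
  induction l; intros H; [reflexivity|]. rewrite !sumR_cons. rewrite H by (left; auto).
  rewrite IHl; auto. intros; apply H; right; auto.
Qed.
Lemma sumR_plus {A} (f g : A -> R) l : sumR l (fun x => f x + g x) = sumR l f + sumR l g.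
Proof. induction l; [unfold sumR; simpl; ring|]. rewrite !sumR_cons, IHl. ring. Qed.
Lemma sumR_minus {A} (f g : A -> R) l : sumR l (fun x => f x - g x) = sumR l f - sumR l g.
Proof. induction l; [unfold sumR; simpl; ring|]. rewrite !sumR_cons, IHl. ring. Qed.
Lemma sumR_scal {A} (f : A -> R) c l : sumR l (fun x => c * f x) = c * sumR l f.
Proof. induction l; [unfold sumR; simpl; ring|]. rewrite !sumR_cons, IHl. ring. Qed.
Lemma sumR_zero {A} (l : list A) : sumR l (fun _ => 0) = 0.
Proof. induction l; [reflexivity|]. rewrite sumR_cons, IHl. ring. Qed.
Lemma sumR_const {A} (l : list A) c : sumR l (fun _ => c) = INR (length l) * c.
Proof. induction l; [unfold sumR; simpl; ring|]. rewrite sumR_cons, IHl. simpl length.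
  rewrite S_INR. ring. Qed.
Lemma sumR_swap {A B} (l1 : list A) (l2 : list B) (f : A -> B -> R) :
  sumR l1 (fun x => sumR l2 (fun y => f x y)) = sumR l2 (fun y => sumR l1 (fun x => f x y)).
Proof.
  induction l1; simpl.
  - symmetry. apply sumR_zero.
  - rewrite sumR_cons, IHl1. rewrite <- sumR_plus. apply sumR_ext. intros; rewrite sumR_cons; ring.
Qed.
Lemma sumR_map {A B} (g : A -> B) (f : B -> R) l : sumR (map g l) f = sumR l (fun x => f (g x)).
Proof. unfold sumR. rewrite map_map. reflexivity. Qed.
Lemma sumR_flat_map {A B} (g : A -> list B) (f : B -> R) l :
  sumR (flat_map g l) f = sumR l (fun x => sumR (g x) f).
Proof. induction l; [reflexivity|]. simpl flat_map. rewrite sumR_app, sumR_cons, IHl. reflexivity. Qed.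
Lemma sumR_prod {A B} (l1 : list A) (l2 : list B) f :
  sumR (list_prod l1 l2) f = sumR l1 (fun x => sumR l2 (fun y => f (x, y))).
Proof.
  induction l1; [reflexivity|]. simpl list_prod. rewrite sumR_app, sumR_cons, IHl1, sumR_map. reflexivity.
Qed.
Lemma sumR_filter {A} (P : A -> bool) f l :
  sumR (filter P l) f = sumR l (fun x => if P x then f x else 0).
Proof.
  induction l; [reflexivity|]. simpl filter. rewrite (sumR_cons _ a l).
  destruct (P a); rewrite ?sumR_cons, IHl; ring.
Qed.
Lemma length_filter_sumR {A} (P : A -> bool) l :
  INR (length (filter P l)) = sumR l (fun x => if P x then 1 else 0).
Proof.
  induction l; [reflexivity|]. simpl filter. rewrite sumR_cons. destruct (P a).
  - simpl length. rewrite S_INR, IHl. ring.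
  - rewrite IHl. ring.
Qed.
Lemma sumR_le {A} (f g : A -> R) l : (forall x, In x l -> f x <= g x) -> sumR l f <= sumR l g.
Proof.
  induction l; intros H; [unfold sumR; simpl; lra|]. rewrite !sumR_cons.
  pose proof (H a (or_introl eq_refl)). pose proof (IHl (fun x Hx => H x (or_intror Hx))). lra.
Qed.
Lemma sumR_nonneg {A} (f : A -> R) l : (forall x, In x l -> 0 <= f x) -> 0 <= sumR l f.
Proof. intros H. rewrite <- (sumR_zero l). apply sumR_le; auto. Qed.
Lemma sumR_abs {A} (f : A -> R) l : Rabs (sumR l f) <= sumR l (fun x => Rabs (f x)).
Proof.
  induction l; [unfold sumR; simpl; rewrite Rabs_R0; lra|]. rewrite !sumR_cons.
  eapply Rle_trans; [apply Rabs_triang|]. lra.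
Qed.
Lemma sumR_bound {A} (f : A -> R) l B : (forall x, In x l -> Rabs (f x) <= B) ->
  Rabs (sumR l f) <= INR (length l) * B.
Proof.
  intros H. eapply Rle_trans; [apply sumR_abs|]. rewrite <- sumR_const. apply sumR_le; auto.
Qed.
Lemma sumR_ge_term {A} (f : A -> R) l x : (forall y, In y l -> 0 <= f y) -> In x l -> f x <= sumR l f.
Proof.
  induction l; intros H Hx; [destruct Hx|]. rewrite sumR_cons. destruct Hx as [<-|Hx].
  - pose proof (sumR_nonneg f l (fun y Hy => H y (or_intror Hy))). lra.
  - pose proof (H a (or_introl eq_refl)). pose proof (IHl (fun y Hy => H y (or_intror Hy)) Hx). lra.
Qed.

Lemma sumR_remove1 {A} (f : A -> R) l x B : (forall y, In y l -> Rabs (f y) <= B) -> In x l ->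
  Rabs (sumR l f - f x) <= (INR (length l) - 1) * B.
Proof.
  induction l; intros H Hx; [destruct Hx|]. rewrite sumR_cons. simpl length. rewrite S_INR.
  destruct Hx as [<-|Hx].
  - replace (f a + sumR l f - f a) with (sumR l f) by ring.
    replace (INR (length l) + 1 - 1) with (INR (length l)) by ring.
    apply sumR_bound; intros; apply H; right; auto.
  - pose proof (H a (or_introl eq_refl)). pose proof (IHl (fun y Hy => H y (or_intror Hy)) Hx).
    replace (f a + sumR l f - f x) with (f a + (sumR l f - f x)) by ring.
    eapply Rle_trans; [apply Rabs_triang|]. lra.
Qed.
Lemma sumR_cancel2 {A} (f : A -> R) l x1 x2 B : (forall y, In y l -> Rabs (f y) <= B) ->
  In x1 l -> In x2 l -> x1 <> x2 -> f x1 + f x2 = 0 ->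
  Rabs (sumR l f) <= (INR (length l) - 2) * B.
Proof.
  induction l; intros H H1 H2 Hne Hs; [destruct H1|]. rewrite sumR_cons. simpl length. rewrite S_INR.
  pose proof (H a (or_introl eq_refl)) as Ha.
  assert (H' : forall y, In y l -> Rabs (f y) <= B) by (intros; apply H; right; auto).
  destruct H1 as [E1|H1].
  - subst a. destruct H2 as [E2|H2]; [congruence|].
    replace (f x1 + sumR l f) with (sumR l f - f x2) by lra.
    pose proof (sumR_remove1 f l x2 B H' H2). lra.
  - destruct H2 as [E2|H2].
    + subst a. replace (f x2 + sumR l f) with (sumR l f - f x1) by lra.
      pose proof (sumR_remove1 f l x1 B H' H1). lra.
    + pose proof (IHl H' H1 H2 Hne Hs).
      eapply Rle_trans; [apply Rabs_triang|]. lra.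
Qed.

Lemma prodR_cons {A} (f : A -> R) a l : prodR (a :: l) f = f a * prodR l f.
Proof. reflexivity. Qed.
Lemma prodR_app {A} (f : A -> R) l1 l2 : prodR (l1 ++ l2) f = prodR l1 f * prodR l2 f.
Proof. induction l1; [unfold prodR; simpl; ring|]. simpl app. rewrite !prodR_cons, IHl1. ring. Qed.
Lemma prodR_ext {A} (f g : A -> R) l : (forall x, In x l -> f x = g x) -> prodR l f = prodR l g.
Proof.
  induction l; intros H; [reflexivity|]. rewrite !prodR_cons. rewrite H by (left; auto).
  rewrite IHl; auto. intros; apply H; right; auto.
Qed.
Lemma prodR_mult {A} (f g : A -> R) l : prodR l (fun x => f x * g x) = prodR l f * prodR l g.
Proof. induction l; [unfold prodR; simpl; ring|]. rewrite !prodR_cons, IHl. ring. Qed.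
Lemma prodR_map {A B} (g : A -> B) (f : B -> R) l : prodR (map g l) f = prodR l (fun x => f (g x)).
Proof. unfold prodR. rewrite map_map. reflexivity. Qed.
Lemma prodR_abs_le1 {A} (f : A -> R) l : (forall x, In x l -> Rabs (f x) <= 1) -> Rabs (prodR l f) <= 1.
Proof.
  induction l; intros H; [unfold prodR; simpl; rewrite Rabs_R1; lra|]. rewrite prodR_cons, Rabs_mult.
  pose proof (H a (or_introl eq_refl)). pose proof (IHl (fun y Hy => H y (or_intror Hy))).
  pose proof (Rabs_pos (f a)). pose proof (Rabs_pos (prodR l f)). nra.
Qed.
Lemma prodR_pm1 {A} (f : A -> R) l : (forall x, In x l -> f x = 1 \/ f x = -1) ->
  prodR l f = 1 \/ prodR l f = -1.
Proof.
  induction l; intros H; [left; reflexivity|]. rewrite prodR_cons.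
  destruct (H a (or_introl eq_refl)) as [E|E]; rewrite E;
  destruct (IHl (fun y Hy => H y (or_intror Hy))) as [E'|E']; rewrite E'; lra.
Qed.
Lemma prodR_zero {A} (f : A -> R) l x : In x l -> f x = 0 -> prodR l f = 0.
Proof.
  induction l; intros Hx H; [destruct Hx|]. rewrite prodR_cons. destruct Hx as [<-|Hx].
  - rewrite H; ring.
  - rewrite (IHl Hx H); ring.
Qed.
Lemma prodR_one {A} (l : list A) : prodR l (fun _ => 1) = 1.
Proof. induction l; [reflexivity|]. rewrite prodR_cons, IHl; ring. Qed.

Lemma In_zrange x lo len : In x (zrange lo len) <-> (lo <= x < lo + Z.of_nat len)%Z.
Proof.
  unfold zrange. rewrite in_map_iff. split.
  - intros [k [<- Hk]]. apply in_seq in Hk. lia.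
  - intros H. exists (Z.to_nat (x - lo)). split; [lia|]. apply in_seq. lia.
Qed.



Lemma zrange_shift lo len : zrange lo len = map (fun x => (lo + x)%Z) (zrange 0 len).
Proof. unfold zrange. rewrite map_map. apply map_ext. intros; lia. Qed.

Lemma seq_shiftn a b : seq a b = map (fun k => (a + k)%nat) (seq 0 b).
Proof.
  revert a; induction b; intros a; [reflexivity|]. simpl. f_equal; [lia|].
  rewrite IHb, (IHb 1%nat), map_map. apply map_ext. intros; lia.
Qed.

Lemma zrange_app lo a b : zrange lo (a + b) = zrange lo a ++ zrange (lo + Z.of_nat a) b.
Proof.
  unfold zrange. rewrite seq_app, map_app. f_equal.
  rewrite seq_shiftn, map_map. simpl. apply map_ext. intros; lia.
Qed.

Lemma length_zrange lo len : length (zrange lo len) = len.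
Proof. unfold zrange. rewrite length_map, length_seq. reflexivity. Qed.

Lemma zrange_S lo len : zrange lo (S len) = zrange lo len ++ [(lo + Z.of_nat len)%Z].
Proof. replace (S len) with (len + 1)%nat by lia. rewrite zrange_app. unfold zrange at 2. simpl. rewrite Z.add_0_r. reflexivity. Qed.

Lemma sumR_zbox_S {s lo len} (f : list Z -> R) :
  sumR (zbox (S s) lo len) f = sumR (zrange lo len) (fun x => sumR (zbox s lo len) (fun h => f (x :: h))).
Proof. simpl zbox. rewrite sumR_flat_map. apply sumR_ext. intros. rewrite sumR_map. reflexivity. Qed.

Lemma In_zbox s lo len h : In h (zbox s lo len) <->
  length h = s /\ Forall (fun x => (lo <= x < lo + Z.of_nat len)%Z) h.
Proof.
  revert h; induction s; intros h; simpl.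
  - split.
    + intros [<-|[]]. split; auto.
    + intros [Hl _]. destruct h; [left; auto|discriminate].
  - rewrite in_flat_map. split.
    + intros [x [Hx Hh]]. apply in_map_iff in Hh. destruct Hh as [h' [<- Hh']].
      apply IHs in Hh'. destruct Hh'. apply In_zrange in Hx. simpl. split; auto.
    + intros [Hl HF]. destruct h as [|x h']; [discriminate|]. inversion HF; subst.
      exists x. split; [apply In_zrange; auto|]. apply in_map. apply IHs. split; auto.
Qed.

Lemma length_zbox s lo len : length (zbox s lo len) = (len ^ s)%nat.
Proof.
  induction s; [reflexivity|]. simpl zbox.
  assert (forall l : list Z, length (flat_map (fun x => map (cons x) (zbox s lo len)) l) = (length l * len ^ s)%nat).
  { induction l; [reflexivity|]. simpl. rewrite length_app, length_map, IHl, IHs. lia. }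
  rewrite H, length_zrange. simpl. lia.
Qed.

Lemma zbox_1 s lo : zbox s lo 1 = [repeat lo s].
Proof. induction s; [reflexivity|]. simpl. rewrite IHs. simpl. f_equal. f_equal. lia. Qed.

Lemma sumR_zrange_split (P b : nat) (a : Z) (f : Z -> R) :
  sumR (zrange (Z.of_nat P * a) (P * b)) f =
  sumR (zrange a b) (fun u => sumR (zrange 0 P) (fun e => f (Z.of_nat P * u + e)%Z)).
Proof.
  induction b.
  - rewrite Nat.mul_0_r. reflexivity.
  - rewrite Nat.mul_succ_r, zrange_app, sumR_app, IHb, zrange_S, sumR_app. f_equal.
    rewrite sumR_cons, sumR_nil, Rplus_0_r. rewrite zrange_shift, sumR_map.
    apply sumR_ext. intros. f_equal. lia.
Qed.

Fixpoint lin (P : Z) (v d : list Z) : list Z :=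
  match v, d with
  | a :: v', b :: d' => (P * a + b)%Z :: lin P v' d'
  | _, _ => []
  end.

Lemma sumR_zbox_split (P b : nat) (a : Z) s (f : list Z -> R) :
  sumR (zbox s (Z.of_nat P * a) (P * b)) f =
  sumR (zbox s a b) (fun v => sumR (zbox s 0 P) (fun d => f (lin (Z.of_nat P) v d))).
Proof.
  revert f; induction s; intros f.
  - unfold sumR; simpl; ring.
  - rewrite !sumR_zbox_S.
    rewrite (sumR_ext _ (fun x => sumR (zbox s a b) (fun v => sumR (zbox s 0 P) (fun d => f (x :: lin (Z.of_nat P) v d))))).
    2:{ intros x _. rewrite IHs. reflexivity. }
    rewrite sumR_zrange_split. apply sumR_ext. intros u _.
    rewrite sumR_swap. apply sumR_ext. intros v _. rewrite sumR_zbox_S. reflexivity.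
Qed.

Lemma sumR_zero_in {A} (f : A -> R) l : (forall x, In x l -> f x = 0) -> sumR l f = 0.
Proof. intros H. rewrite (sumR_ext _ (fun _ => 0)) by auto. apply sumR_zero. Qed.

Lemma sumR_zrange_ext (f : Z -> R) lo len lo' len' :
  (lo' <= lo)%Z -> (lo + Z.of_nat len <= lo' + Z.of_nat len')%Z ->
  (forall x, (x < lo \/ lo + Z.of_nat len <= x)%Z -> f x = 0) ->
  sumR (zrange lo len) f = sumR (zrange lo' len') f.
Proof.
  intros H1 H2 H3.
  replace len' with (Z.to_nat (lo - lo') + (len + Z.to_nat (lo' + Z.of_nat len' - lo - Z.of_nat len)))%nat by lia.
  rewrite !zrange_app, !sumR_app.
  rewrite (sumR_zero_in f (zrange lo' _)).
  2:{ intros x Hx. apply In_zrange in Hx. apply H3. lia. }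
  rewrite (sumR_zero_in f (zrange (_ + _ + _) _)).
  2:{ intros x Hx. apply In_zrange in Hx. apply H3. lia. }
  replace (lo' + Z.of_nat (Z.to_nat (lo - lo')))%Z with lo by lia. ring.
Qed.

Lemma sumR_zrange_le (f : Z -> R) lo len lo' len' :
  (lo' <= lo)%Z -> (lo + Z.of_nat len <= lo' + Z.of_nat len')%Z ->
  (forall x, 0 <= f x) ->
  sumR (zrange lo len) f <= sumR (zrange lo' len') f.
Proof.
  intros H1 H2 H3.
  replace len' with (Z.to_nat (lo - lo') + (len + Z.to_nat (lo' + Z.of_nat len' - lo - Z.of_nat len)))%nat by lia.
  rewrite !zrange_app, !sumR_app.
  pose proof (sumR_nonneg f (zrange lo' (Z.to_nat (lo - lo'))) (fun x _ => H3 x)).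
  pose proof (sumR_nonneg f (zrange (lo' + Z.of_nat (Z.to_nat (lo - lo')) + Z.of_nat len) (Z.to_nat (lo' + Z.of_nat len' - lo - Z.of_nat len))) (fun x _ => H3 x)).
  assert (E : (lo' + Z.of_nat (Z.to_nat (lo - lo')) = lo)%Z) by lia. rewrite E in *. lra.
Qed.

Definition allin (lo hi : Z) (h : list Z) : Prop := Forall (fun x => (lo <= x < hi)%Z) h.

Lemma sumR_zbox_ext s (f : list Z -> R) lo len lo' len' :
  (lo' <= lo)%Z -> (lo + Z.of_nat len <= lo' + Z.of_nat len')%Z ->
  (forall h, length h = s -> ~ allin lo (lo + Z.of_nat len) h -> f h = 0) ->
  sumR (zbox s lo len) f = sumR (zbox s lo' len') f.
Proof.
  revert f; induction s; intros f H1 H2 H3; [reflexivity|].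
  rewrite !sumR_zbox_S.
  rewrite (sumR_zrange_ext _ lo len lo' len'); auto.
  - apply sumR_ext. intros x Hx. apply IHs; auto. intros h Hl Hn. apply H3; simpl; auto.
    intros Ha. inversion Ha; auto.
  - intros x Hx. apply sumR_zero_in. intros h Hh. apply In_zbox in Hh. destruct Hh as [Hl _].
    apply H3. simpl; auto. intros Ha. inversion Ha; subst. lia.
Qed.

Lemma sumR_zbox_le s (f : list Z -> R) lo len lo' len' :
  (lo' <= lo)%Z -> (lo + Z.of_nat len <= lo' + Z.of_nat len')%Z ->
  (forall h, 0 <= f h) ->
  sumR (zbox s lo len) f <= sumR (zbox s lo' len') f.
Proof.
  revert f; induction s; intros f H1 H2 H3; [apply Rle_refl|].
  rewrite !sumR_zbox_S.
  eapply Rle_trans.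
  - apply sumR_le. intros x _. apply (IHs (fun h => f (x :: h))); auto.
  - apply sumR_zrange_le; auto. intros x. apply sumR_nonneg. auto.
Qed.

Lemma wdot_split (f g : Z -> Z) c w h : (forall x, x = f x + c * g x)%Z ->
  wdot w h = (wdot w (map f h) + c * wdot w (map g h))%Z.
Proof.
  intros H. revert h; induction w as [|b w IH]; intros h; [simpl; lia|].
  destruct h as [|x h]; [simpl; lia|]. simpl. rewrite (IH h). specialize (H x). destruct b; [rewrite H at 1|]; ring.
Qed.

Lemma wdot_lin P w v d : length v = length d ->
  wdot w (lin P v d) = (P * wdot w v + wdot w d)%Z.
Proof.
  revert v d; induction w as [|b w IH]; intros v d Hl; [simpl; lia|].
  destruct v as [|x v]; destruct d as [|y d]; simpl in *; try lia; try discriminate.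
  rewrite IH by lia. destruct b; lia.
Qed.

Lemma map_mod_lin P v d : (0 < P)%Z -> length v = length d -> Forall (fun x => (0 <= x < P)%Z) d ->
  map (fun x => x mod P)%Z (lin P v d) = d /\ map (fun x => x / P)%Z (lin P v d) = v.
Proof.
  intros HP. revert d; induction v as [|a v IH]; intros d Hl HF.
  - destruct d; [auto|discriminate].
  - destruct d as [|b d]; [discriminate|]. inversion HF; subst. simpl.
    destruct (IH d) as [E1 E2]; auto. rewrite E1, E2. split; f_equal.
    + rewrite Z.add_comm, Z.mul_comm, Z.mod_add by lia. apply Z.mod_small; lia.
    + rewrite Z.add_comm, Z.mul_comm, Z.div_add by lia. rewrite Z.div_small by lia. lia.
Qed.

Lemma wdot_bounds w h c : Forall (fun x => (0 <= x <= c)%Z) h ->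
  (0 <= wdot w h <= Z.of_nat (length h) * c)%Z.
Proof.
  revert w; induction h as [|x h IH]; intros w HF.
  - destruct w as [|[] w]; simpl; lia.
  - inversion HF; subst.
    destruct w as [|b w]; simpl length; simpl wdot.
    + pose proof (IH [] H2) as IH'. simpl in IH'. nia.
    + pose proof (IH w H2) as IH'. destruct b; nia.
Qed.

Lemma wdot_zeros w h : Forall (fun x => x = 0%Z) h -> wdot w h = 0%Z.
Proof.
  revert h; induction w as [|b w IH]; intros h HF; [reflexivity|].
  destruct h as [|x h]; [reflexivity|]. inversion HF; subst. simpl. rewrite IH by auto. destruct b; lia.
Qed.

Lemma nat_odd_Z n : Nat.odd n = Z.odd (Z.of_nat n).
Proof.
  induction n; [reflexivity|]. rewrite Nat.odd_succ, <- Nat.negb_odd, IHn.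
  rewrite Nat2Z.inj_succ, Z.odd_succ, <- Z.negb_odd. reflexivity.
Qed.

Definition gfun (a : bool) (z : Z) : R :=
  if (z <? 0)%Z then 0 else (if a && Z.odd z then - rsZ z else rsZ z).

Lemma rsZ_step z j : (0 <= z)%Z -> (0 <= j < 2)%Z ->
  rsZ (2 * z + j) = (if Z.odd j && Z.odd z then -1 else 1) * rsZ z.
Proof.
  intros Hz Hj. unfold rsZ.
  replace (Z.to_nat (2 * z + j)) with (2 * Z.to_nat z + Z.to_nat j)%nat by lia.
  rewrite rs_step by lia. rewrite !nat_odd_Z, !Z2Nat.id by lia. reflexivity.
Qed.

Lemma gfun_step a y t :
  gfun a (2 * y + t) = (if a && Z.odd t then -1 else 1) * gfun (Z.odd t) (y + t / 2).
Proof.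
  set (z := (y + t / 2)%Z). set (j := (t mod 2)%Z).
  assert (Hj : (0 <= j < 2)%Z) by (apply Z.mod_pos_bound; lia).
  assert (E : (2 * y + t = 2 * z + j)%Z).
  { unfold z, j. pose proof (Z.div_mod t 2). lia. }
  assert (Ot : Z.odd t = Z.odd j).
  { unfold j. rewrite Zmod_odd. destruct (Z.odd t); reflexivity. }
  rewrite E, Ot. unfold gfun.
  destruct (z <? 0)%Z eqn:Hz.
  - apply Z.ltb_lt in Hz. replace (2 * z + j <? 0)%Z with true by (symmetry; apply Z.ltb_lt; lia). ring.
  - apply Z.ltb_ge in Hz. replace (2 * z + j <? 0)%Z with false by (symmetry; apply Z.ltb_ge; lia).
    rewrite rsZ_step by lia.
    assert (Oj : Z.odd (2 * z + j) = Z.odd j) by (rewrite Z.add_comm, Z.odd_add_mul_2; reflexivity).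
    rewrite Oj. destruct a, (Z.odd j), (Z.odd z); simpl; ring.
Qed.

Lemma gfun_abs a z : Rabs (gfun a z) <= 1.
Proof.
  unfold gfun, rsZ, rudin_shapiro. destruct (z <? 0)%Z.
  - rewrite Rabs_R0; lra.
  - destruct (a && Z.odd z); rewrite ?Rabs_Ropp, pow_1_abs; lra.
Qed.

Definition st := ((list bool -> bool) * (list bool -> Z))%type.
Definition sigma0 : st := (fun _ => false, fun _ => 0%Z).

Definition two (k : nat) : Z := (2 ^ Z.of_nat k)%Z.
Lemma two_S k : two (S k) = (2 * two k)%Z.
Proof. unfold two. rewrite Nat2Z.inj_succ, Z.pow_succ_r by lia. ring. Qed.
Lemma two_pos k : (0 < two k)%Z.
Proof. unfold two. apply Z.pow_pos_nonneg; lia. Qed.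
Lemma two_0 : two 0 = 1%Z. Proof. reflexivity. Qed.
Lemma two_nat k : two k = Z.of_nat (2 ^ k).
Proof. induction k; [reflexivity|]. rewrite two_S, IHk. rewrite Nat.pow_succ_r', Nat2Z.inj_mul. reflexivity. Qed.
Lemma two_add a b : two (a + b) = (two a * two b)%Z.
Proof. unfold two. rewrite Nat2Z.inj_add, Z.pow_add_r by lia. ring. Qed.

Section Auto.
Variable s : nat.
Definition cv := cube_vertices s.

Definition Gv (σ : st) (V : list bool -> Z) : R :=
  prodR cv (fun w => gfun (fst σ w) (V w + snd σ w)).

Definition tval (σ : st) (e : Z) (d : list Z) (w : list bool) : Z := (e + wdot w d + snd σ w)%Z.
Definition stepst (σ : st) (e : Z) (d : list Z) : st :=
  (fun w => Z.odd (tval σ e d w), fun w => (tval σ e d w / 2)%Z).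
Definition stepsign (σ : st) (e : Z) (d : list Z) : R :=
  prodR cv (fun w => if fst σ w && Z.odd (tval σ e d w) then -1 else 1).

Definition md2 (D : list Z) := map (fun x => x mod 2)%Z D.
Definition dv2 (D : list Z) := map (fun x => x / 2)%Z D.

Fixpoint pathsign (k : nat) (σ : st) (E : Z) (D : list Z) : R :=
  match k with
  | O => 1
  | S k' => stepsign σ (E mod 2) (md2 D) * pathsign k' (stepst σ (E mod 2) (md2 D)) (E / 2) (dv2 D)
  end.
Fixpoint pathend (k : nat) (σ : st) (E : Z) (D : list Z) : st :=
  match k with
  | O => σ
  | S k' => pathend k' (stepst σ (E mod 2) (md2 D)) (E / 2) (dv2 D)
  end.
Fixpoint W (k : nat) (σ : st) (Φ : st -> R) : R :=
  match k with
  | O => Φ σ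
  | S k' => sumR (zrange 0 2) (fun e => sumR (zbox s 0 2) (fun d =>
              stepsign σ e d * W k' (stepst σ e d) Φ))
  end.

Lemma Gv_ext σ V V' : (forall w, V w = V' w) -> Gv σ V = Gv σ V'.
Proof. intros H. unfold Gv. apply prodR_ext. intros w _. rewrite H. reflexivity. Qed.

Lemma G_step σ Zf e d :
  Gv σ (fun w => 2 * Zf w + e + wdot w d)%Z = stepsign σ e d * Gv (stepst σ e d) Zf.
Proof.
  unfold Gv, stepsign. rewrite <- prodR_mult. apply prodR_ext. intros w _.
  replace (2 * Zf w + e + wdot w d + snd σ w)%Z with (2 * Zf w + tval σ e d w)%Z
    by (unfold tval; ring).
  rewrite gfun_step. unfold stepst. simpl. reflexivity.
Qed.

Lemma wdot_md2 w D : wdot w D = (wdot w (md2 D) + 2 * wdot w (dv2 D))%Z.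
Proof. apply wdot_split. intros x. pose proof (Z.div_mod x 2). lia. Qed.

Definition inbox (k : nat) (E : Z) (D : list Z) : Prop :=
  (0 <= E < two k)%Z /\ Forall (fun x => 0 <= x < two k)%Z D.

Lemma inbox_S k E D : inbox (S k) E D ->
  inbox k (E / 2) (dv2 D) /\ (0 <= E mod 2 < 2)%Z /\ Forall (fun x => 0 <= x < 2)%Z (md2 D).
Proof.
  unfold inbox, dv2, md2. rewrite two_S. pose proof (two_pos k). intros [H1 H2]. split; [split|split].
  - split; [apply Z.div_pos; lia|]. apply Z.div_lt_upper_bound; lia.
  - rewrite Forall_map. eapply Forall_impl; [|exact H2]. cbv beta. intros x Hx.
    split; [apply Z.div_pos; lia|]. apply Z.div_lt_upper_bound; lia.
  - apply Z.mod_pos_bound; lia.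
  - rewrite Forall_map. eapply Forall_impl; [|exact H2]. cbv beta. intros x Hx. apply Z.mod_pos_bound; lia.
Qed.

Lemma inbox_0 E D : inbox 0 E D -> E = 0%Z /\ forall w, wdot w D = 0%Z.
Proof.
  unfold inbox. rewrite two_0. intros [H1 H2]. split; [lia|]. intros w. apply wdot_zeros.
  eapply Forall_impl; [|exact H2]. simpl; intros; lia.
Qed.

Lemma G_path k : forall σ E D Y, inbox k E D ->
  Gv σ (fun w => two k * Y w + E + wdot w D)%Z = pathsign k σ E D * Gv (pathend k σ E D) Y.
Proof.
  induction k; intros σ E D Y HB.
  - simpl. rewrite Rmult_1_l. apply Gv_ext. intros w. apply inbox_0 in HB. destruct HB as [-> HD].
    rewrite HD. destruct (Y w); reflexivity.
  - destruct (inbox_S _ _ _ HB) as [HB' _]. simpl pathsign. simpl pathend.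
    rewrite Rmult_assoc, <- IHk by auto. rewrite <- G_step. apply Gv_ext. intros w.
    rewrite two_S. rewrite (wdot_md2 w D). pose proof (Z.div_mod E 2). fold (md2 D) (dv2 D). lia.
Qed.


Lemma step_snd_calc σ E D w :
  (snd (stepst σ (E mod 2) (md2 D)) w + E / 2 + wdot w (dv2 D))%Z = ((snd σ w + E + wdot w D) / 2)%Z.
Proof.
  unfold stepst, tval. simpl.
  rewrite <- Z.add_assoc, <- Z.div_add by lia.
  f_equal. rewrite (wdot_md2 w D). pose proof (Z.div_mod E 2). lia.
Qed.

Lemma step_fst_calc σ E D w :
  fst (stepst σ (E mod 2) (md2 D)) w = Z.odd (snd σ w + E + wdot w D).
Proof.
  unfold stepst, tval. simpl.
  replace (snd σ w + E + wdot w D)%Z with ((E mod 2 + wdot w (md2 D) + snd σ w) + 2 * (E / 2 + wdot w (dv2 D)))%Z.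
  - rewrite Z.odd_add_mul_2. reflexivity.
  - rewrite (wdot_md2 w D). pose proof (Z.div_mod E 2). lia.
Qed.

Lemma pe_snd k : forall σ E D, inbox k E D -> forall w,
  snd (pathend k σ E D) w = ((snd σ w + E + wdot w D) / two k)%Z.
Proof.
  induction k; intros σ E D HB w.
  - simpl. apply inbox_0 in HB. destruct HB as [-> HD]. rewrite HD, two_0. rewrite Z.div_1_r. ring.
  - destruct (inbox_S _ _ _ HB) as [HB' _]. simpl pathend. rewrite IHk by auto.
    rewrite step_snd_calc, two_S, Z.div_div by (try lia; apply two_pos). reflexivity.
Qed.

Lemma pe_fst k : forall σ E D, inbox (S k) E D -> forall w,
  fst (pathend (S k) σ E D) w = Z.odd ((snd σ w + E + wdot w D) / two k).
Proof.
  induction k; intros σ E D HB w.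
  - change (pathend 1 σ E D) with (pathend 0 (stepst σ (E mod 2) (md2 D)) (E / 2) (dv2 D)). change (pathend 0 ?a ?b ?c) with a. rewrite step_fst_calc, two_0, Z.div_1_r. reflexivity.
  - destruct (inbox_S _ _ _ HB) as [HB' _]. change (pathend (S (S k)) σ E D) with
      (pathend (S k) (stepst σ (E mod 2) (md2 D)) (E / 2) (dv2 D)).
    rewrite IHk by auto.
    rewrite step_snd_calc, two_S, Z.div_div by (try lia; apply two_pos). reflexivity.
Qed.

Lemma pathsign_pm1 k : forall σ E D, pathsign k σ E D = 1 \/ pathsign k σ E D = -1.
Proof.
  induction k; intros σ E D; [left; reflexivity|]. simpl pathsign.
  assert (H : stepsign σ (E mod 2) (md2 D) = 1 \/ stepsign σ (E mod 2) (md2 D) = -1).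
  { apply prodR_pm1. intros w _. destruct (_ && _); auto. }
  destruct H as [-> | ->]; destruct (IHk (stepst σ (E mod 2) (md2 D)) (E / 2)%Z (dv2 D)) as [-> | ->];
  [left|right|right|left]; ring.
Qed.

Lemma pathsign_S k σ E D : pathsign (S k) σ E D =
  stepsign σ (E mod 2) (md2 D) * pathsign k (stepst σ (E mod 2) (md2 D)) (E / 2) (dv2 D).
Proof. reflexivity. Qed.
Lemma pathend_S k σ E D : pathend (S k) σ E D =
  pathend k (stepst σ (E mod 2) (md2 D)) (E / 2) (dv2 D).
Proof. reflexivity. Qed.

Lemma W_S k σ Φ : W (S k) σ Φ = sumR (zrange 0 2) (fun e => sumR (zbox s 0 2) (fun d =>
              stepsign σ e d * W k (stepst σ e d) Φ)).
Proof. reflexivity. Qed.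

Lemma W_comp a : forall b σ Φ, W (a + b) σ Φ = W a σ (fun τ => W b τ Φ).
Proof.
  induction a; intros b σ Φ; [reflexivity|]. simpl.
  apply sumR_ext; intros e _. apply sumR_ext; intros d _. rewrite IHa. reflexivity.
Qed.

Lemma sumR_zrange_split0 (P b : nat) (f : Z -> R) :
  sumR (zrange 0 (P * b)) f = sumR (zrange 0 b) (fun u => sumR (zrange 0 P) (fun e => f (Z.of_nat P * u + e)%Z)).
Proof. rewrite <- sumR_zrange_split. rewrite Z.mul_0_r. reflexivity. Qed.
Lemma sumR_zbox_split0 (P b : nat) s' (f : list Z -> R) :
  sumR (zbox s' 0 (P * b)) f = sumR (zbox s' 0 b) (fun v => sumR (zbox s' 0 P) (fun d => f (lin (Z.of_nat P) v d))).
Proof. rewrite <- sumR_zbox_split. rewrite Z.mul_0_r. reflexivity. Qed.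

Lemma W_box k : forall σ Φ, W k σ Φ =
  sumR (zrange 0 (2 ^ k)) (fun E => sumR (zbox s 0 (2 ^ k)) (fun D =>
     pathsign k σ E D * Φ (pathend k σ E D))).
Proof.
  induction k; intros σ Φ.
  - simpl. rewrite zbox_1. unfold sumR, zrange. simpl. ring.
  - rewrite Nat.pow_succ_r'. rewrite sumR_zrange_split0.
    rewrite (sumR_ext _ (fun u => sumR (zrange 0 2) (fun e => sumR (zbox s 0 (2^k)) (fun v =>
        sumR (zbox s 0 2) (fun d => stepsign σ e d * (pathsign k (stepst σ e d) u v *
           Φ (pathend k (stepst σ e d) u v))))))).
    2:{ intros u _. apply sumR_ext. intros e He. apply In_zrange in He.
        rewrite sumR_zbox_split0. apply sumR_ext. intros v Hv. apply sumR_ext. intros d Hd.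
        apply In_zbox in Hv. apply In_zbox in Hd. destruct Hv as [Hv1 _]. destruct Hd as [Hd1 Hd2].
        destruct (map_mod_lin 2 v d) as [E1 E2]; [lia|lia|simpl in Hd2; exact Hd2|].
        rewrite pathsign_S, pathend_S. unfold md2, dv2.
        replace (Z.of_nat 2) with 2%Z by reflexivity. rewrite E1, E2.
        replace ((2 * u + e) mod 2)%Z with e.
        2:{ rewrite Z.add_comm, Z.mul_comm, Z.mod_add by lia. rewrite Z.mod_small; lia. }
        replace ((2 * u + e) / 2)%Z with u.
        2:{ rewrite Z.add_comm, Z.mul_comm, Z.div_add by lia. rewrite Z.div_small; lia. }
        ring. }
    rewrite W_S. rewrite (sumR_swap (zrange 0 (2 ^ k)) (zrange 0 2)). apply sumR_ext. intros e _.
    rewrite (sumR_ext _ (fun u => sumR (zbox s 0 2) (fun d => sumR (zbox s 0 (2 ^ k)) (fun v =>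
         stepsign σ e d * (pathsign k (stepst σ e d) u v * Φ (pathend k (stepst σ e d) u v)))))).
    2:{ intros u _. apply sumR_swap. }
    rewrite (sumR_swap (zrange 0 (2 ^ k)) (zbox s 0 2)). apply sumR_ext. intros d _.
    rewrite (sumR_ext _ (fun u => stepsign σ e d * sumR (zbox s 0 (2 ^ k)) (fun v =>
         (pathsign k (stepst σ e d) u v * Φ (pathend k (stepst σ e d) u v))))).
    2:{ intros u _. apply sumR_scal. }
    rewrite sumR_scal, IHk. reflexivity.
Qed.

Definition inclass (σ : st) : Prop := forall w, (0 <= snd σ w <= Z.of_nat s)%Z.

Lemma inclass_sigma0 : inclass sigma0.
Proof. intros w. simpl. lia. Qed.

Lemma pathend_inclass k σ E D : inclass σ -> inbox k E D -> length D = s -> inclass (pathend k σ E D).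
Proof.
  intros Hc HB Hl w. rewrite pe_snd by auto. pose proof (two_pos k).
  destruct HB as [HE HD]. specialize (Hc w).
  assert (Hw := wdot_bounds w D (two k - 1) ltac:(eapply Forall_impl; [|exact HD]; cbv beta; intros; lia)).
  rewrite Hl in Hw.
  split.
  - apply Z.div_pos; lia.
  - assert (((snd σ w + E + wdot w D) / two k) < Z.of_nat s + 1)%Z; [|lia].
    apply Z.div_lt_upper_bound; nia.
Qed.
End Auto.

Lemma f11_shift mu : forall y, (y < 2 ^ S mu)%nat ->
  f11 (y + 2 ^ S mu) = (f11 y + (if (2 ^ mu <=? y)%nat then 1 else 0))%nat.
Proof.
  induction mu; intros y Hy.
  - simpl in Hy. destruct y as [|[|y]]; [reflexivity|reflexivity|lia].
  - pose proof (Nat.div_mod y 2 ltac:(lia)) as Hd. pose proof (Nat.mod_upper_bound y 2 ltac:(lia)) as Hm.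
    set (z := (y / 2)%nat) in *. set (j := (y mod 2)%nat) in *.
    assert (Hz : (z < 2 ^ S mu)%nat) by (rewrite Nat.pow_succ_r' in Hy; lia).
    replace (y + 2 ^ S (S mu))%nat with (2 * (z + 2 ^ S mu) + j)%nat by (rewrite (Nat.pow_succ_r' 2 (S mu)); lia).
    rewrite f11_step by auto. rewrite IHmu by auto.
    replace y with (2 * z + j)%nat at 1 by lia. rewrite f11_step by auto.
    assert (Ho : Nat.odd (z + 2 ^ S mu) = Nat.odd z).
    { rewrite Nat.odd_add. rewrite Nat.pow_succ_r', Nat.odd_mul. simpl. destruct (Nat.odd z); reflexivity. }
    rewrite Ho.
    replace (2 ^ S mu <=? y)%nat with (2 ^ mu <=? z)%nat.
    + lia.
    + rewrite Nat.pow_succ_r'. destruct (2 ^ mu <=? z)%nat eqn:E1; destruct (2 * 2 ^ mu <=? y)%nat eqn:E2;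
      auto; apply Nat.leb_le in E1 || apply Nat.leb_gt in E1; apply Nat.leb_le in E2 || apply Nat.leb_gt in E2; lia.
Qed.

Lemma rsZ_shift mu y : (0 <= y < two (S mu))%Z ->
  rsZ (y + two (S mu)) = (if (two mu <=? y)%Z then -1 else 1) * rsZ y.
Proof.
  intros Hy. unfold rsZ, rudin_shapiro. rewrite !two_nat in *.
  replace (Z.to_nat (y + Z.of_nat (2 ^ S mu))) with (Z.to_nat y + 2 ^ S mu)%nat by lia.
  rewrite f11_shift by lia. rewrite pow_add.
  replace (Z.of_nat (2 ^ mu) <=? y)%Z with (2 ^ mu <=? Z.to_nat y)%nat.
  - destruct (2 ^ mu <=? Z.to_nat y)%nat; simpl; ring.
  - destruct (2 ^ mu <=? Z.to_nat y)%nat eqn:E1; destruct (Z.of_nat (2 ^ mu) <=? y)%Z eqn:E2; auto;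
    apply Nat.leb_le in E1 || apply Nat.leb_gt in E1; apply Z.leb_le in E2 || apply Z.leb_gt in E2; lia.
Qed.

Lemma rsZ_sq y : rsZ y * rsZ y = 1.
Proof. unfold rsZ, rudin_shapiro. rewrite <- pow_add. replace (f11 (Z.to_nat y) + f11 (Z.to_nat y))%nat with (2 * f11 (Z.to_nat y))%nat by lia.
  rewrite pow_mult. simpl. rewrite Rmult_1_r. replace (-1 * -1) with 1 by ring. apply pow1. Qed.

Lemma wdot_cons b w x h : wdot (b :: w) (x :: h) = ((if b then x else 0) + wdot w h)%Z.
Proof. reflexivity. Qed.

Ltac destr_ifs :=
  repeat match goal with
  | |- context [if (?a =? ?b)%Z then _ else _] => destruct (Z.eqb_spec a b)
  | |- context [if (?a <=? ?b)%Z then _ else _] => destruct (Z.leb_spec a b)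
  | |- context [if (?a <? ?b)%Z then _ else _] => destruct (Z.ltb_spec a b)
  | |- context [if ?c then _ else _] => destruct c
  end;
  first [reflexivity | exfalso; lia | lra].

Lemma prod_ones_witness k :
  prodR (cube_vertices k) (fun w => if (wdot w (repeat 1%Z k) =? Z.of_nat k)%Z then -1 else 1) = -1.
Proof.
  induction k.
  - unfold prodR; simpl; ring.
  - simpl cube_vertices. rewrite prodR_app, !prodR_map. simpl repeat.
    rewrite (prodR_ext _ (fun _ => 1)).
    2:{ intros w Hw. rewrite wdot_cons.
        assert (Hb := wdot_bounds w (repeat 1%Z k) 1 ltac:(apply Forall_forall; intros x Hx; apply repeat_spec in Hx; lia)).
        rewrite repeat_length in Hb.
        destr_ifs. }
    rewrite prodR_one, Rmult_1_l. eapply eq_trans; [|exact IHk]. apply prodR_ext. intros w _. rewrite wdot_cons.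
    destr_ifs.
Qed.

Definition wE (s' : nat) : Z := (two s' * 2 - Z.of_nat s')%Z.   (* 2^(mu-1) - s' with mu = s'+2 *)
Definition wD (s' : nat) : list Z := two (S (S s')) :: repeat 1%Z s'.

Lemma two_ge k : (Z.of_nat k < two k)%Z.
Proof. induction k; [reflexivity|]. rewrite two_S. lia. Qed.

Lemma witness s' : Gv (S s') sigma0 (fun w => wE s' + wdot w (wD s'))%Z = -1.
Proof.
  unfold Gv, cv. change (cube_vertices (S s')) with (map (cons false) (cube_vertices s') ++ map (cons true) (cube_vertices s')).
  rewrite prodR_app, !prodR_map.
  rewrite <- prodR_mult. rewrite <- (prod_ones_witness s'). apply prodR_ext. intros w Hw.
  simpl fst; simpl snd. unfold wD. rewrite !wdot_cons.
  assert (Hb := wdot_bounds w (repeat 1%Z s') 1 ltac:(apply Forall_forall; intros x Hx; apply repeat_spec in Hx; lia)).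
  rewrite repeat_length in Hb.
  set (c := wdot w (repeat 1%Z s')) in *.
  pose proof (two_ge s'). pose proof (two_pos s').
  assert (Hy : (0 <= wE s' + (0 + c) < two (S (S s')))%Z) by (unfold wE; rewrite !two_S; lia).
  replace (wE s' + (two (S (S s')) + c) + 0)%Z with ((wE s' + (0 + c)) + two (S (S s')))%Z by ring.
  rewrite Z.add_0_r. unfold gfun.
  replace (wE s' + (0 + c) <? 0)%Z with false by (symmetry; apply Z.ltb_ge; lia).
  replace (wE s' + (0 + c) + two (S (S s')) <? 0)%Z with false by (symmetry; apply Z.ltb_ge; lia).
  simpl andb. rewrite rsZ_shift by auto.
  replace (two (S s') <=? wE s' + (0 + c))%Z with (c =? Z.of_nat s')%Z.
  - rewrite Rmult_comm, Rmult_assoc, rsZ_sq. ring.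
  - unfold wE. rewrite two_S.
    destruct (c =? Z.of_nat s')%Z eqn:E1; destruct (2 * two s' <=? two s' * 2 - Z.of_nat s' + (0 + c))%Z eqn:E2;
    auto; apply Z.eqb_eq in E1 || apply Z.eqb_neq in E1; apply Z.leb_le in E2 || apply Z.leb_gt in E2; lia.
Qed.

Definition Z0 (D : list Z) := map (fun _ => 0%Z) D.

Lemma shift_lemma s m : forall M σ E D,
  pathsign s (m + M) σ (two m * E) (map (fun x => two m * x)%Z D) =
    pathsign s m σ 0 (Z0 D) * pathsign s M (pathend m σ 0 (Z0 D)) E D /\
  pathend (m + M) σ (two m * E) (map (fun x => two m * x)%Z D) = pathend M (pathend m σ 0 (Z0 D)) E D.
Proof.
  induction m; intros M σ E D.
  - simpl plus. replace (two 0 * E)%Z with E by (rewrite two_0; ring).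
    replace (map (fun x => two 0 * x)%Z D) with D by (rewrite two_0, (map_ext _ (fun x => x)) by (intros; ring); symmetry; apply map_id).
    split; simpl; [ring|reflexivity].
  - change (S m + M)%nat with (S (m + M)). rewrite !pathsign_S, !pathend_S.
    assert (E1 : ((two (S m) * E) mod 2 = 0)%Z).
    { rewrite two_S, <- Z.mul_assoc, Z.mul_comm. apply Z.mod_mul. lia. }
    assert (E2 : ((two (S m) * E) / 2 = two m * E)%Z).
    { rewrite two_S, <- Z.mul_assoc, Z.mul_comm. apply Z.div_mul. lia. }
    assert (E3 : md2 (map (fun x => two (S m) * x)%Z D) = Z0 D).
    { unfold md2, Z0. rewrite map_map. apply map_ext. intros x. rewrite two_S, <- Z.mul_assoc, Z.mul_comm. apply Z.mod_mul. lia. }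
    assert (E4 : dv2 (map (fun x => two (S m) * x)%Z D) = map (fun x => two m * x)%Z D).
    { unfold dv2. rewrite map_map. apply map_ext. intros x. rewrite two_S, <- Z.mul_assoc, Z.mul_comm. apply Z.div_mul. lia. }
    assert (E5 : md2 (Z0 D) = Z0 D).
    { unfold md2, Z0. rewrite map_map. reflexivity. }
    assert (E6 : dv2 (Z0 D) = Z0 D).
    { unfold dv2, Z0. rewrite map_map. reflexivity. }
    rewrite E1, E2, E3, E4, E5, E6. rewrite Zmod_0_l, Zdiv_0_l.
    destruct (IHm M (stepst σ 0 (Z0 D)) E D) as [H1 H2]. rewrite H1, H2. split; [ring|reflexivity].
Qed.

Lemma st_eq (σ : st) : (forall w, fst σ w = false) -> (forall w, snd σ w = 0%Z) -> σ = sigma0.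
Proof.
  destruct σ as [a q]. simpl. intros H1 H2. unfold sigma0. f_equal; apply functional_extensionality; auto.
Qed.

Lemma pathend_sigma0 k σ E D : inbox (S k) E D ->
  (forall w, 0 <= snd σ w + E + wdot w D < two k)%Z -> pathend (S k) σ E D = sigma0.
Proof.
  intros HB H. apply st_eq.
  - intros w. rewrite pe_fst by auto. rewrite Z.div_small by auto. reflexivity.
  - intros w. rewrite pe_snd by auto. rewrite two_S. apply Z.div_small. specialize (H w). pose proof (two_pos k). lia.
Qed.

Lemma Gv_sigma0_zero s : Gv s sigma0 (fun _ => 0%Z) = 1.
Proof.
  unfold Gv. rewrite <- (prodR_one (cv s)). apply prodR_ext. intros w _. simpl.
  unfold gfun, rsZ, rudin_shapiro. simpl. reflexivity.
Qed.

Lemma pathsign_from_G s k E D : inbox k E D -> pathend k sigma0 E D = sigma0 ->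
  pathsign s k sigma0 E D = Gv s sigma0 (fun w => E + wdot w D)%Z.
Proof.
  intros HB He. pose proof (G_path s k sigma0 E D (fun _ => 0%Z) HB) as H.
  rewrite He, Gv_sigma0_zero, Rmult_1_r in H. rewrite <- H. apply Gv_ext. intros; ring.
Qed.

Lemma Rabs_pm1 x : x = 1 \/ x = -1 -> Rabs x = 1.
Proof. intros [-> | ->]; [apply Rabs_R1|rewrite Rabs_left; lra]. Qed.

Section Contract.
Variable s' : nat.
Let s := S s'.
Let m := S (S s).
Let M := (s' + 4)%nat.
Definition Kb := (m + M)%nat.
Definition Pn := (2 ^ (Kb * S s))%nat.

Lemma Z0_wD : Z0 (wD s') = repeat 0%Z s.
Proof. unfold Z0, wD, s. simpl. f_equal. induction s'; simpl; f_equal; auto. Qed.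

Lemma pathend_m_zero σ : inclass s σ -> pathend m σ 0 (Z0 (wD s')) = sigma0.
Proof.
  intros Hc. unfold m. apply pathend_sigma0.
  - split; [split; [lia|apply two_pos]|]. unfold Z0. apply Forall_forall. intros x Hx.
    apply in_map_iff in Hx. destruct Hx as [y [<- _]]. pose proof (two_pos (S (S s))). lia.
  - intros w. assert (wdot w (Z0 (wD s')) = 0%Z) as ->.
    { apply wdot_zeros. unfold Z0. apply Forall_forall. intros x Hx. apply in_map_iff in Hx. destruct Hx as [y [<- _]]. reflexivity. }
    specialize (Hc w). pose proof (two_ge (S s)). lia.
Qed.

Lemma wit_bounds w : (0 <= wE s' + wdot w (wD s') < two (S (S (S s'))))%Z.
Proof.
  pose proof (two_ge s'). pose proof (two_pos s').
  destruct w as [|b w].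
  - simpl wdot. unfold wE. rewrite !two_S. lia.
  - unfold wE, wD. rewrite wdot_cons.
    assert (Hb := wdot_bounds w (repeat 1%Z s') 1 ltac:(apply Forall_forall; intros x Hx; apply repeat_spec in Hx; lia)).
    rewrite repeat_length in Hb. rewrite !two_S. destruct b; lia.
Qed.

Lemma inbox_wit : inbox M (wE s') (wD s').
Proof.
  unfold M. pose proof (wit_bounds []) as Hw. simpl wdot in Hw. split.
  - replace (s' + 4)%nat with (S (S (S (S s')))) by lia. rewrite two_S. lia.
  - unfold wD. constructor.
    + replace (s' + 4)%nat with (S (S (S (S s')))) by lia. rewrite !two_S. pose proof (two_pos s'). lia.
    + apply Forall_forall. intros x Hx. apply repeat_spec in Hx. subst. pose proof (two_ge (s' + 4)). lia.
Qed.

Lemma inbox_zero : inbox M 0 (Z0 (wD s')).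
Proof.
  split; [split; [lia|apply two_pos]|]. unfold Z0. apply Forall_forall. intros x Hx.
  apply in_map_iff in Hx. destruct Hx as [y [<- _]]. pose proof (two_pos M). lia.
Qed.

Lemma end_wit : pathend M sigma0 (wE s') (wD s') = sigma0.
Proof.
  unfold M. replace (s' + 4)%nat with (S (s' + 3)) by lia. apply pathend_sigma0.
  - replace (S (s' + 3)) with (s' + 4)%nat by lia. exact inbox_wit.
  - intros w. simpl snd. replace (s' + 3)%nat with (S (S (S s'))) by lia. pose proof (wit_bounds w). lia.
Qed.

Lemma end_zero : pathend M sigma0 0 (Z0 (wD s')) = sigma0.
Proof.
  unfold M. replace (s' + 4)%nat with (S (s' + 3)) by lia. apply pathend_sigma0.
  - replace (S (s' + 3)) with (s' + 4)%nat by lia. exact inbox_zero.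
  - intros w. simpl snd. assert (wdot w (Z0 (wD s')) = 0%Z) as ->.
    { apply wdot_zeros. unfold Z0. apply Forall_forall. intros x Hx. apply in_map_iff in Hx. destruct Hx as [y [<- _]]. reflexivity. }
    pose proof (two_pos (s' + 3)). lia.
Qed.

Lemma sign_wit : pathsign s M sigma0 (wE s') (wD s') = -1.
Proof.
  rewrite pathsign_from_G by (apply inbox_wit || apply end_wit). apply witness.
Qed.

Lemma sign_zero : pathsign s M sigma0 0 (Z0 (wD s')) = 1.
Proof.
  rewrite pathsign_from_G by (apply inbox_zero || apply end_zero).
  rewrite <- (Gv_sigma0_zero s). apply Gv_ext. intros w. rewrite wdot_zeros; [ring|].
  unfold Z0. apply Forall_forall. intros x Hx. apply in_map_iff in Hx. destruct Hx as [y [<- _]]. reflexivity.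
Qed.

Lemma length_prod_box k : length (list_prod (zrange 0 (2 ^ k)) (zbox s 0 (2 ^ k))) = (2 ^ (k * S s))%nat.
Proof.
  rewrite length_prod, length_zrange, length_zbox. rewrite <- Nat.pow_mul_r.
  rewrite <- Nat.pow_add_r. f_equal. lia.
Qed.

Lemma contract σ Ψ B : inclass s σ -> (forall τ, inclass s τ -> Rabs (Ψ τ) <= B) ->
  Rabs (W s Kb σ Ψ) <= (INR Pn - 2) * B.
Proof.
  intros Hc HΨ. rewrite W_box.
  set (f := fun p : Z * list Z => pathsign s Kb σ (fst p) (snd p) * Ψ (pathend Kb σ (fst p) (snd p))).
  transitivity (Rabs (sumR (list_prod (zrange 0 (2 ^ Kb)) (zbox s 0 (2 ^ Kb))) f)).
  { rewrite sumR_prod. apply Req_le. reflexivity. }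
  unfold Pn. rewrite <- length_prod_box.
  pose proof (shift_lemma s m M σ (wE s') (wD s')) as [S1 S2].
  pose proof (shift_lemma s m M σ 0 (Z0 (wD s'))) as [T1 T2].
  assert (Ez : (two m * 0 = 0)%Z) by ring.
  assert (EZ : map (fun x => two m * x)%Z (Z0 (wD s')) = Z0 (wD s')).
  { unfold Z0. rewrite map_map. apply map_ext. intros; ring. }
  assert (EZZ : Z0 (Z0 (wD s')) = Z0 (wD s')).
  { unfold Z0. rewrite map_map. reflexivity. }
  rewrite Ez, EZ, EZZ in T1, T2.
  rewrite (pathend_m_zero σ Hc) in S1, S2, T1, T2.
  rewrite sign_wit in S1. rewrite sign_zero in T1. rewrite end_wit in S2. rewrite end_zero in T2.
  apply (sumR_cancel2 f _ ((two m * wE s')%Z, map (fun x => two m * x)%Z (wD s')) (0%Z, Z0 (wD s'))).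
  - intros [E D] Hp. apply in_prod_iff in Hp. destruct Hp as [HE HD].
    apply In_zrange in HE. apply In_zbox in HD. destruct HD as [HDl HDF].
    unfold f. simpl fst; simpl snd. rewrite Rabs_mult.
    assert (HBx : inbox Kb E D).
    { split; rewrite two_nat; [lia|]. eapply Forall_impl; [|exact HDF]. cbv beta. intros; lia. }
    rewrite (Rabs_pm1 _ (pathsign_pm1 s Kb σ E D)), Rmult_1_l.
    apply HΨ, pathend_inclass; auto.
  - apply in_prod; [apply In_zrange|apply In_zbox].
    + pose proof inbox_wit as [HE _]. pose proof (two_pos m). rewrite <- two_nat. unfold Kb. rewrite two_add. nia.
    + pose proof inbox_wit as [_ HF]. split.
      * rewrite length_map. unfold wD. simpl. rewrite repeat_length. reflexivity.
      * apply Forall_forall. intros x Hx. apply in_map_iff in Hx. destruct Hx as [y [<- Hy]].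
        rewrite Forall_forall in HF. specialize (HF y Hy). pose proof (two_pos m).
        rewrite <- two_nat. unfold Kb. rewrite two_add. nia.
  - apply in_prod; [apply In_zrange|apply In_zbox].
    + pose proof (two_pos Kb). rewrite two_nat in H. lia.
    + split; [unfold Z0, wD; simpl; rewrite length_map, repeat_length; reflexivity|].
      unfold Z0. apply Forall_forall. intros x Hx. apply in_map_iff in Hx. destruct Hx as [y [<- _]].
      pose proof (two_pos Kb). rewrite two_nat in H. lia.
  - intros Heq. assert (H : (two m * wE s')%Z = 0%Z) by (apply (f_equal fst) in Heq; exact Heq).
    unfold wE in H. pose proof (two_pos m). pose proof (two_ge s').
    apply Z.mul_eq_0 in H. lia.
  - unfold f. cbn [fst snd]. change Kb with (m + M)%nat. rewrite S1, S2, T1, T2. ring.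
Qed.

End Contract.

Lemma iter_contract s' (Φ : st -> R) : (forall τ, Rabs (Φ τ) <= 1) ->
  forall j σ, inclass (S s') σ -> Rabs (W (S s') (j * Kb s') σ Φ) <= (INR (Pn s') - 2) ^ j.
Proof.
  intros HΦ j. induction j; intros σ Hc.
  - simpl. apply HΦ.
  - replace (S j * Kb s')%nat with (Kb s' + j * Kb s')%nat by lia. rewrite W_comp. simpl pow.
    apply contract; auto.
Qed.

Lemma bern n x : 0 <= x <= 1 -> (1 - x) ^ n * (1 + INR n * x) <= 1.
Proof.
  intros Hx. induction n.
  - simpl. lra.
  - rewrite S_INR. simpl pow.
    assert (H0 : 0 <= (1 - x) ^ n) by (apply pow_le; lra).
    assert (E : (1 - x) * (1 - x) ^ n * (1 + (INR n + 1) * x) =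
                (1 - x) ^ n * (1 + INR n * x) - (1 - x) ^ n * (x * x * (INR n + 1))) by ring.
    rewrite E. pose proof (pos_INR n).
    assert (0 <= (1 - x) ^ n * (x * x * (INR n + 1))).
    { apply Rmult_le_pos; auto. apply Rmult_le_pos; [nra|lra]. }
    lra.
Qed.

Lemma P_bound (n : nat) : (2 <= n)%nat -> (INR n - 2) ^ n <= (INR n) ^ n / 2.
Proof.
  intros Hn. assert (HP : 2 <= INR n) by (replace 2 with (INR 2) by reflexivity; apply le_INR; lia).
  assert (Hd1 : 0 <= 2 / INR n) by (unfold Rdiv; apply Rmult_le_pos; [lra | left; apply Rinv_0_lt_compat; lra]).
  assert (Hd2 : 2 / INR n <= 1).
  { unfold Rdiv. apply (Rmult_le_reg_r (INR n)); [lra|]. rewrite Rmult_assoc, Rinv_l by lra. lra. }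
  pose proof (bern n (2 / INR n) ltac:(lra)) as H.
  replace (INR n - 2) with (INR n * (1 - 2 / INR n)) by (field; lra).
  rewrite Rpow_mult_distr.
  replace (1 + INR n * (2 / INR n)) with 3 in H by (field; lra).
  assert (0 < INR n ^ n) by (apply pow_lt; lra).
  assert (0 <= (1 - 2 / INR n) ^ n).
  { apply pow_le. lra. }
  nra.
Qed.

Definition blk s' := (Pn s' * Kb s')%nat.

Lemma Pn_ge2 s' : (2 <= Pn s')%nat.
Proof.
  unfold Pn. assert (1 <= Kb s' * S (S s'))%nat by (unfold Kb; lia).
  destruct (Kb s' * S (S s'))%nat as [|k]; [lia|]. rewrite Nat.pow_succ_r'.
  pose proof (Nat.pow_nonzero 2 k ltac:(lia)). lia.
Qed.

Lemma W_bound s' (Φ : st -> R) : (forall τ, Rabs (Φ τ) <= 1) ->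
  forall j, Rabs (W (S s') (j * blk s') sigma0 Φ) <= 2 ^ (S (S s') * (j * blk s')) * (/ 2) ^ j.
Proof.
  intros HΦ j. unfold blk.
  replace (j * (Pn s' * Kb s'))%nat with ((Pn s' * j) * Kb s')%nat by ring.
  eapply Rle_trans; [apply iter_contract; auto; apply inclass_sigma0|].
  rewrite pow_mult.
  assert (HP := P_bound (Pn s') (Pn_ge2 s')).
  assert (H0 : 0 <= (INR (Pn s') - 2) ^ Pn s').
  { apply pow_le. pose proof (Pn_ge2 s'). replace 2 with (INR 2) by reflexivity. apply Rge_le, Rge_minus, Rle_ge, le_INR; lia. }
  eapply Rle_trans.
  - apply pow_incr. split; [exact H0|exact HP].
  - assert (E : INR (Pn s') ^ Pn s' = 2 ^ (Kb s' * S (S s') * Pn s')).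
    { unfold Pn at 1. rewrite pow_INR, <- pow_mult. replace (INR 2) with 2 by (simpl; ring). reflexivity. }
    rewrite E. unfold Rdiv. rewrite Rpow_mult_distr, <- pow_mult.
    replace (Kb s' * S (S s') * Pn s' * j)%nat with (S (S s') * (Pn s' * j * Kb s'))%nat by ring.
    right; reflexivity.
Qed.

Ltac destr_bools :=
  repeat match goal with
  | |- context [(?a =? ?b)%Z] => destruct (Z.eqb_spec a b)
  | |- context [(?a <=? ?b)%Z] => destruct (Z.leb_spec a b)
  | |- context [(?a <? ?b)%Z] => destruct (Z.ltb_spec a b)
  end; cbn [andb orb negb] in *.

Lemma In_cv s w : In w (cube_vertices s) <-> length w = s.
Proof.
  revert w; induction s; intros w; simpl.
  - split; [intros [<-|[]]; reflexivity|]. destruct w; [auto|discriminate].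
  - rewrite in_app_iff, !in_map_iff. split.
    + intros [[w' [<- H]]|[w' [<- H]]]; apply IHs in H; simpl; lia.
    + intros H. destruct w as [|b w]; [discriminate|]. simpl in H.
      destruct b; [right|left]; exists w; split; auto; apply IHs; lia.
Qed.

Lemma length_cv s : length (cube_vertices s) = (2 ^ s)%nat.
Proof. induction s; [reflexivity|]. simpl. rewrite length_app, !length_map, IHs. lia. Qed.

Lemma forallb_false_ex {A} (f : A -> bool) l : forallb f l = false -> exists x, In x l /\ f x = false.
Proof.
  induction l; simpl; [discriminate|]. destruct (f a) eqn:E; simpl.
  - intros H. destruct (IHl H) as [x [Hx Hf]]. exists x; auto.
  - intros _. exists a; auto.
Qed.

Lemma wdot_false w h : (forall b, In b w -> b = false) -> wdot w h = 0%Z.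
Proof.
  revert h; induction w as [|b w IH]; intros h H; [reflexivity|]. destruct h; [reflexivity|].
  rewrite wdot_cons. rewrite (H b (or_introl eq_refl)), IH; auto. intros; apply H; right; auto.
Qed.

Lemma wdot_unit h1 x h2 :
  wdot (repeat false (length h1) ++ true :: repeat false (length h2)) (h1 ++ x :: h2) = x.
Proof.
  induction h1; simpl.
  - rewrite wdot_false; [lia|]. intros b Hb. apply repeat_spec in Hb; auto.
  - rewrite IHh1. lia.
Qed.

Section Num.
Variable s : nat.
Variable N : nat.

Definition Tfun (n : Z) (h : list Z) : R :=
  prodR (cube_vertices s) (fun w => gfun false (n + wdot w h) * (if (n + wdot w h <? Z.of_nat N)%Z then 1 else 0)).

Lemma numer_eq : fold_right Rplus 0 (map (fun p => cube_product s rsZ (fst p) (snd p)) (gowers_configs s N)) =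
  sumR (zrange 0 N) (fun n => sumR (zbox s (1 - Z.of_nat N) (2 * N - 1)) (fun h => Tfun n h)).
Proof.
  change (fold_right Rplus 0 (map (fun p => cube_product s rsZ (fst p) (snd p)) (gowers_configs s N)))
    with (sumR (gowers_configs s N) (fun p => cube_product s rsZ (fst p) (snd p))).
  unfold gowers_configs. rewrite sumR_filter, sumR_prod. apply sumR_ext; intros n _. apply sumR_ext; intros h _.
  simpl fst; simpl snd. unfold cube_product, Tfun. fold (prodR (cube_vertices s) (fun w => rsZ (n + wdot w h))).
  destruct (cube_in s N n h) eqn:Hc.
  - unfold cube_in in Hc. rewrite forallb_forall in Hc. apply prodR_ext. intros w Hw.
    specialize (Hc w Hw). unfold in_interval in Hc. unfold gfun. destr_bools; try discriminate; try lia; ring.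
  - symmetry. unfold cube_in in Hc. apply forallb_false_ex in Hc. destruct Hc as [w [Hw Hf]].
    apply (prodR_zero _ _ w Hw). unfold in_interval in Hf. unfold gfun. destr_bools; try discriminate; try lia; ring.
Qed.

Lemma Tfun_zero_n n h : length h = s -> ~ (0 <= n < Z.of_nat N)%Z -> Tfun n h = 0.
Proof.
  intros Hl Hn. apply (prodR_zero _ _ (repeat false s)).
  - apply In_cv. apply repeat_length.
  - rewrite wdot_false by (intros b Hb; apply repeat_spec in Hb; auto). unfold gfun. destr_bools; try lia; ring.
Qed.

Lemma not_allin_ex lo hi h : ~ allin lo hi h -> exists x, In x h /\ ~ (lo <= x < hi)%Z.
Proof.
  unfold allin. induction h as [|y h IH]; intros Hh; [exfalso; apply Hh; constructor|].
  destruct (Z_le_dec lo y); destruct (Z_lt_dec y hi).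
  - destruct IH as [x [Hx Hnx]].
    + intros HF. apply Hh. constructor; auto; lia.
    + exists x; split; [right|]; auto.
  - exists y; split; [left|]; auto; lia.
  - exists y; split; [left|]; auto; lia.
  - exists y; split; [left|]; auto; lia.
Qed.

Lemma Tfun_zero_h n h : length h = s -> ~ allin (1 - Z.of_nat N) (Z.of_nat N) h -> Tfun n h = 0.
Proof.
  intros Hl Hh.
  destruct (Z.leb_spec 0 n); [|apply Tfun_zero_n; auto; lia].
  destruct (Z.ltb_spec n (Z.of_nat N)); [|apply Tfun_zero_n; auto; lia].
  destruct (not_allin_ex _ _ _ Hh) as [x [Hx Hnx]].
  destruct (in_split _ _ Hx) as [h1 [h2 ->]].
  apply (prodR_zero _ _ (repeat false (length h1) ++ true :: repeat false (length h2))).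
  - apply In_cv. rewrite length_app. simpl. rewrite !repeat_length. rewrite <- Hl, length_app. simpl. lia.
  - rewrite wdot_unit. unfold gfun. destr_bools; try lia; ring.
Qed.

Lemma numer_big (P A1 : nat) : (1 <= N)%nat -> (N <= P * A1)%nat ->
  sumR (zrange 0 N) (fun n => sumR (zbox s (1 - Z.of_nat N) (2 * N - 1)) (fun h => Tfun n h)) =
  sumR (zrange 0 (P * A1)) (fun n => sumR (zbox s (Z.of_nat P * - Z.of_nat A1) (P * (2 * A1))) (fun h => Tfun n h)).
Proof.
  intros HN HPA.
  rewrite (sumR_ext _ (fun n => sumR (zbox s (Z.of_nat P * - Z.of_nat A1) (P * (2 * A1))) (fun h => Tfun n h))).
  - apply sumR_zrange_ext; try lia.
    intros x Hx. apply sumR_zero_in. intros h Hh. apply In_zbox in Hh. destruct Hh as [Hl _].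
    apply Tfun_zero_n; auto; lia.
  - intros n _. apply sumR_zbox_ext; try lia.
    intros h Hl Hn. apply Tfun_zero_h; auto.
    replace (1 - Z.of_nat N + Z.of_nat (2 * N - 1))%Z with (Z.of_nat N) in Hn by lia. exact Hn.
Qed.

Definition PhiF (Nk : Z) (Y : list bool -> Z) (τ : st) : R :=
  prodR (cube_vertices s) (fun w => gfun (fst τ w) (Y w + snd τ w) * (if (Y w + snd τ w <? Nk)%Z then 1 else 0)).

Lemma PhiF_abs Nk Y τ : Rabs (PhiF Nk Y τ) <= 1.
Proof.
  apply prodR_abs_le1. intros w _. rewrite Rabs_mult. pose proof (gfun_abs (fst τ w) (Y w + snd τ w)).
  pose proof (Rabs_pos (gfun (fst τ w) (Y w + snd τ w))).
  destruct (_ <? _)%Z; [rewrite Rabs_R1|rewrite Rabs_R0]; nra.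
Qed.

Lemma Tfun_abs n h : Rabs (Tfun n h) <= 1.
Proof.
  apply prodR_abs_le1. intros w _. rewrite Rabs_mult. pose proof (gfun_abs false (n + wdot w h)).
  pose proof (Rabs_pos (gfun false (n + wdot w h))).
  destruct (_ <? _)%Z; [rewrite Rabs_R1|rewrite Rabs_R0]; nra.
Qed.

Definition Afun (k : nat) (n : Z) (h : list Z) : R :=
  pathsign s k sigma0 (n mod two k)%Z (map (fun x => x mod two k)%Z h) *
  PhiF (Z.of_nat N / two k) (fun w => n / two k + wdot w (map (fun x => x / two k)%Z h))%Z
    (pathend k sigma0 (n mod two k)%Z (map (fun x => x mod two k)%Z h)).

Definition Jcond (k : nat) (n : Z) (h : list Z) (w : list bool) : bool :=
  ((two k * (Z.of_nat N / two k) <=? n + wdot w h) && (n + wdot w h <? two k * (Z.of_nat N / two k) + two k))%Z.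

Lemma TA k n h : Rabs (Tfun n h - Afun k n h) <=
  2 * sumR (cube_vertices s) (fun w => if Jcond k n h w then 1 else 0).
Proof.
  set (Pz := two k). pose proof (two_pos k) as HPz. fold Pz in HPz.
  set (E := (n mod Pz)%Z). set (D := map (fun x => x mod Pz)%Z h).
  set (Y := fun w => (n / Pz + wdot w (map (fun x => x / Pz) h))%Z).
  set (τ := pathend k sigma0 E D).
  assert (HB : inbox k E D).
  { split; [apply Z.mod_pos_bound; auto|]. unfold D. apply Forall_forall. intros x Hx.
    apply in_map_iff in Hx. destruct Hx as [y [<- _]]. apply Z.mod_pos_bound; auto. }
  assert (Hx : forall w, (n + wdot w h = Pz * Y w + E + wdot w D)%Z).
  { intros w. unfold Y, E, D. rewrite (wdot_split (fun x => x mod Pz) (fun x => x / Pz) Pz w h)%Z.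
    - pose proof (Z.div_mod n Pz ltac:(lia)). lia.
    - intros x. pose proof (Z.div_mod x Pz ltac:(lia)). lia. }
  pose proof (G_path s k sigma0 E D Y HB) as HG. fold Pz in HG. fold τ in HG.
  assert (HT : Tfun n h = Gv s sigma0 (fun w => Pz * Y w + E + wdot w D)%Z *
     prodR (cube_vertices s) (fun w => if (n + wdot w h <? Z.of_nat N)%Z then 1 else 0)).
  { unfold Tfun. rewrite prodR_mult. f_equal. unfold Gv, cv. apply prodR_ext. intros w _.
    rewrite Hx. simpl snd. rewrite Z.add_0_r. reflexivity. }
  assert (HA : Afun k n h = pathsign s k sigma0 E D * Gv s τ Y *
     prodR (cube_vertices s) (fun w => if (Y w + snd τ w <? Z.of_nat N / Pz)%Z then 1 else 0)).
  { unfold Afun. fold Pz. fold E D. fold τ. unfold PhiF. rewrite prodR_mult. unfold Gv, cv. rewrite Rmult_assoc. reflexivity. }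
  assert (Hnn : forall w, 0 <= (if Jcond k n h w then 1 else 0)) by (intros; destruct (Jcond k n h w); lra).
  destruct (existsb (Jcond k n h) (cube_vertices s)) eqn:Ex.
  - apply existsb_exists in Ex. destruct Ex as [w [Hw Hj]].
    pose proof (sumR_ge_term (fun w => if Jcond k n h w then 1 else 0) (cube_vertices s) w (fun y _ => Hnn y) Hw) as Hge.
    cbv beta in Hge. rewrite Hj in Hge.
    pose proof (Tfun_abs n h). unfold Afun in *.
    pose proof (PhiF_abs (Z.of_nat N / two k) (fun w => n / two k + wdot w (map (fun x => x / two k)%Z h))%Z
       (pathend k sigma0 (n mod two k)%Z (map (fun x => x mod two k)%Z h))).
    pose proof (Rabs_pm1 _ (pathsign_pm1 s k sigma0 (n mod two k) (map (fun x => x mod two k)%Z h))) as Hs1.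
    unfold Rminus. eapply Rle_trans; [apply Rabs_triang|]. rewrite Rabs_Ropp, Rabs_mult, Hs1. lra.
  - assert (Hall : forall w, In w (cube_vertices s) -> Jcond k n h w = false).
    { intros w Hw. destruct (Jcond k n h w) eqn:Hj; auto. exfalso.
      assert (existsb (Jcond k n h) (cube_vertices s) = true) by (apply existsb_exists; eauto). congruence. }
    replace (Tfun n h - Afun k n h) with 0.
    + rewrite Rabs_R0. pose proof (sumR_nonneg _ (cube_vertices s) (fun y _ => Hnn y)). lra.
    + rewrite HT, HA, HG. rewrite (prodR_ext (fun w => if (n + wdot w h <? Z.of_nat N)%Z then 1 else 0)
        (fun w => if (Y w + snd τ w <? Z.of_nat N / Pz)%Z then 1 else 0)); [ring|].
      intros w Hw. specialize (Hall w Hw). unfold Jcond in Hall. fold Pz in Hall.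
      pose proof (pe_snd k sigma0 E D HB w) as Hq. fold τ in Hq. fold Pz in Hq. simpl snd in Hq.
      set (q := snd τ w) in *. set (z := (Y w + q)%Z).
      pose proof (Z.div_mod (0 + E + wdot w D) Pz ltac:(lia)) as Hd. rewrite <- Hq in Hd.
      pose proof (Z.mod_pos_bound (0 + E + wdot w D) Pz HPz) as Hl.
      set (l := ((0 + E + wdot w D) mod Pz)%Z) in *.
      pose proof (Z.div_mod (Z.of_nat N) Pz ltac:(lia)) as HN.
      pose proof (Z.mod_pos_bound (Z.of_nat N) Pz HPz) as Hr.
      set (Nk := (Z.of_nat N / Pz)%Z) in *. set (r := (Z.of_nat N mod Pz)%Z) in *.
      specialize (Hx w).
      assert (Hxz : (n + wdot w h = Pz * z + l)%Z) by (unfold z; lia).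
      assert (H1 : (z < Nk -> Pz * z <= Pz * Nk - Pz)%Z) by (intros; nia).
      assert (H2 : (z > Nk -> Pz * z >= Pz * Nk + Pz)%Z) by (intros; nia).
      destruct (Z.lt_total z Nk) as [Hz|[Hz|Hz]].
      * destr_bools; try lia; reflexivity.
      * subst z. rewrite Hz in Hxz. destr_bools; try discriminate; try lia; reflexivity.
      * destr_bools; try lia; reflexivity.
Qed.

End Num.

Lemma zrange_cons lo len : zrange lo (S len) = lo :: zrange (lo + 1) len.
Proof.
  change (S len) with (1 + len)%nat. rewrite zrange_app. unfold zrange at 1. simpl. f_equal. f_equal; lia.
Qed.

Lemma count_window lo len a b c :
  sumR (zrange lo len) (fun n => if ((a <=? n + c) && (n + c <? b))%Z then 1 else 0)
   <= IZR (Z.max 0 (b - Z.max a (lo + c))).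
Proof.
  revert lo; induction len; intros lo.
  - unfold sumR; simpl. apply IZR_le. lia.
  - rewrite zrange_cons, sumR_cons. specialize (IHlen (lo + 1)%Z).
    destr_bools.
    + assert (Hz : (1 + Z.max 0 (b - Z.max a (lo + 1 + c)) <= Z.max 0 (b - Z.max a (lo + c)))%Z) by lia.
      apply IZR_le in Hz. rewrite plus_IZR in Hz. lra.
    + assert (Hz : (Z.max 0 (b - Z.max a (lo + 1 + c)) <= Z.max 0 (b - Z.max a (lo + c)))%Z) by lia.
      apply IZR_le in Hz. lra.
    + assert (Hz : (Z.max 0 (b - Z.max a (lo + 1 + c)) <= Z.max 0 (b - Z.max a (lo + c)))%Z) by lia.
      apply IZR_le in Hz. lra.
    + assert (Hz : (Z.max 0 (b - Z.max a (lo + 1 + c)) <= Z.max 0 (b - Z.max a (lo + c)))%Z) by lia.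
      apply IZR_le in Hz. lra.
Qed.

Section Sums.
Variable s N : nat.

Lemma err_sum k lo len (bigH : list (list Z)) :
  sumR (zrange lo len) (fun n => sumR bigH (fun h => Rabs (Tfun s N n h - Afun s N k n h)))
  <= 2 * (INR (length bigH) * (INR (2 ^ s) * IZR (two k))).
Proof.
  eapply Rle_trans.
  - apply sumR_le. intros n _. apply sumR_le. intros h _. apply TA.
  - rewrite (sumR_ext _ (fun n => 2 * sumR bigH (fun h => sumR (cube_vertices s) (fun w => if Jcond N k n h w then 1 else 0)))).
    2:{ intros n _. apply sumR_scal. }
    rewrite sumR_scal. apply Rmult_le_compat_l; [lra|].
    rewrite sumR_swap.
    rewrite <- sumR_const. apply sumR_le. intros h _.
    rewrite sumR_swap. rewrite <- length_cv, <- sumR_const. apply sumR_le. intros w _.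
    unfold Jcond. eapply Rle_trans; [apply count_window|]. apply IZR_le.
    pose proof (two_pos k). lia.
Qed.

Lemma main_sum k (A1 : nat) Bw :
  (forall Φ, (forall τ, Rabs (Φ τ) <= 1) -> Rabs (W s k sigma0 Φ) <= Bw) ->
  Rabs (sumR (zrange 0 (2 ^ k * A1)) (fun n =>
     sumR (zbox s (Z.of_nat (2 ^ k) * - Z.of_nat A1) (2 ^ k * (2 * A1))) (fun h => Afun s N k n h)))
  <= INR A1 * (INR ((2 * A1) ^ s) * Bw).
Proof.
  intros HW.
  rewrite sumR_zrange_split0.
  rewrite (sumR_ext _ (fun u => sumR (zbox s (- Z.of_nat A1) (2 * A1)) (fun v =>
      W s k sigma0 (PhiF s (Z.of_nat N / two k) (fun w => u + wdot w v)%Z)))).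
  - eapply Rle_trans; [apply sumR_bound|].
    + intros u _. eapply Rle_trans; [apply sumR_bound|].
      * intros v _. apply HW. intros τ. apply PhiF_abs.
      * rewrite length_zbox. apply Rle_refl.
    + rewrite length_zrange. apply Rle_refl.
  - intros u _.
    rewrite (sumR_ext _ (fun e => sumR (zbox s (- Z.of_nat A1) (2 * A1)) (fun v =>
        sumR (zbox s 0 (2 ^ k)) (fun d => Afun s N k (Z.of_nat (2 ^ k) * u + e) (lin (Z.of_nat (2 ^ k)) v d))))).
    2:{ intros e _. apply sumR_zbox_split. }
    rewrite sumR_swap. apply sumR_ext. intros v Hv. rewrite W_box. apply sumR_ext. intros e He.
    apply sumR_ext. intros d Hd.
    apply In_zrange in He. apply In_zbox in Hv. apply In_zbox in Hd. destruct Hv as [Hv1 _]. destruct Hd as [Hd1 Hd2].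
    rewrite <- two_nat in *. pose proof (two_pos k).
    destruct (map_mod_lin (two k) v d) as [E1 E2]; [lia|lia|simpl in Hd2; exact Hd2|].
    unfold Afun. rewrite E1, E2.
    replace ((two k * u + e) mod two k)%Z with e.
    2:{ rewrite Z.add_comm, Z.mul_comm, Z.mod_add by lia. rewrite Z.mod_small; lia. }
    replace ((two k * u + e) / two k)%Z with u.
    2:{ rewrite Z.add_comm, Z.mul_comm, Z.div_add by lia. rewrite Z.div_small; lia. }
    reflexivity.
Qed.

End Sums.

Lemma real_num (Nr Pr A1r q : R) (s j k : nat) :
  1 <= Pr -> Pr * Pr <= Nr -> Pr = 2 ^ k -> q = (/2) ^ j -> (j <= k)%nat -> 0 <= A1r -> Pr * A1r <= 2 * Nr ->
  A1r * ((2 * A1r) ^ s * (2 ^ (S s * k) * q)) + 2 * ((Pr * (2 * A1r)) ^ s * (2 ^ s * Pr))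
  <= (2 * 4 ^ s + 2 * 8 ^ s) * Nr ^ S s * q.
Proof.
  intros HP HPP HPk Hq Hjk HA HPA.
  assert (Hq0 : 0 < q) by (rewrite Hq; apply pow_lt; lra).
  assert (HNr : 0 < Nr) by nra.
  assert (E1 : 2 ^ (S s * k) = Pr ^ S s) by (rewrite HPk, <- !pow_mult; f_equal; lia).
  rewrite E1.
  assert (E2 : A1r * ((2 * A1r) ^ s * (Pr ^ S s * q)) = (Pr * A1r) * (2 * (Pr * A1r)) ^ s * q).
  { simpl pow. rewrite !Rpow_mult_distr. ring. }
  rewrite E2.
  assert (Hx : 0 <= Pr * A1r) by nra.
  assert (H1 : (2 * (Pr * A1r)) ^ s <= (4 * Nr) ^ s) by (apply pow_incr; nra).
  assert (H1' : (Pr * (2 * A1r)) ^ s <= (4 * Nr) ^ s) by (apply pow_incr; nra).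
  assert (Hqk : Pr * q >= 1).
  { rewrite HPk, Hq. replace k with (j + (k - j))%nat by lia. rewrite pow_add.
    assert (1 <= 2 ^ (k - j)) by (apply pow_R1_Rle; lra).
    assert (E : 2 ^ j * (/ 2) ^ j = 1) by (rewrite <- Rpow_mult_distr, Rinv_r, pow1; lra).
    nra. }
  assert (HPq : Pr <= Nr * q) by nra.
  assert (H4 : (4 * Nr) ^ s = 4 ^ s * Nr ^ s) by apply Rpow_mult_distr.
  assert (H8 : 8 ^ s = 2 ^ s * 4 ^ s) by (rewrite <- Rpow_mult_distr; f_equal; ring).
  assert (Hp0 : 0 <= (4 * Nr) ^ s) by (apply pow_le; lra).
  assert (Hp1 : 0 <= (2 * (Pr * A1r)) ^ s) by (apply pow_le; nra).
  assert (Hp2 : 0 <= (Pr * (2 * A1r)) ^ s) by (apply pow_le; nra).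
  assert (Hp3 : 0 < 2 ^ s) by (apply pow_lt; lra).
  assert (T1 : Pr * A1r * (2 * (Pr * A1r)) ^ s * q <= 2 * Nr * (4 * Nr) ^ s * q).
  { apply Rmult_le_compat_r; [lra|]. apply Rmult_le_compat; auto. }
  assert (T2 : 2 * ((Pr * (2 * A1r)) ^ s * (2 ^ s * Pr)) <= 2 * ((4 * Nr) ^ s * (2 ^ s * (Nr * q)))).
  { apply Rmult_le_compat_l; [lra|]. apply Rmult_le_compat; auto; [nra|]. apply Rmult_le_compat_l; lra. }
  simpl (Nr ^ S s). rewrite H4 in T1, T2. rewrite H8. nra.
Qed.

Lemma real_avg (S0 Nr Den M0r q K1 : R) (s : nat) :
  2 * INR (S s) <= Nr -> M0r >= Nr / INR (S s) - 1 -> M0r ^ S s <= Den -> 0 < Den ->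
  Rabs S0 <= K1 * Nr ^ S s * q -> 0 <= K1 -> 0 <= q ->
  S0 / Den <= K1 * (2 * INR (S s)) ^ S s * q.
Proof.
  intros HN HM HD HDp HS HK Hq.
  set (c := INR (S s)) in *. assert (Hc : 1 <= c) by (unfold c; rewrite S_INR; pose proof (pos_INR s); lra).
  assert (HNr : 0 < Nr) by lra.
  assert (HM2 : Nr / (2 * c) <= M0r).
  { assert (Nr / c - 1 >= Nr / (2 * c)); [|lra].
    unfold Rdiv. rewrite Rinv_mult. assert (/ c * Nr >= 2) ; [|nra].
    apply Rle_ge. apply (Rmult_le_reg_l c); [lra|]. rewrite <- Rmult_assoc, Rinv_r by lra. lra. }
  assert (HD2 : (Nr / (2 * c)) ^ S s <= Den).
  { eapply Rle_trans; [|exact HD]. apply pow_incr. split; [|exact HM2]. apply Rlt_le, Rdiv_lt_0_compat; lra. }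
  assert (E : (Nr / (2 * c)) ^ S s = Nr ^ S s / (2 * c) ^ S s).
  { unfold Rdiv. rewrite Rpow_mult_distr, pow_inv. reflexivity. }
  rewrite E in HD2.
  assert (Hpc : 0 < (2 * c) ^ S s) by (apply pow_lt; lra).
  assert (HpN : 0 < Nr ^ S s) by (apply pow_lt; lra).
  apply Rle_trans with (Rabs S0 / Den).
  - unfold Rdiv. apply Rmult_le_compat_r; [apply Rlt_le, Rinv_0_lt_compat; lra|]. apply Rle_abs.
  - apply Rle_trans with (K1 * Nr ^ S s * q / Den).
    + unfold Rdiv. apply Rmult_le_compat_r; [apply Rlt_le, Rinv_0_lt_compat; lra|]. exact HS.
    + apply Rle_trans with (K1 * Nr ^ S s * q / (Nr ^ S s / (2 * c) ^ S s)).
      * unfold Rdiv. apply Rmult_le_compat_l; [apply Rmult_le_pos; [apply Rmult_le_pos|]; lra|].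
        apply Rinv_le_contravar; [apply Rdiv_lt_0_compat; lra| exact HD2].
      * right. field. lra.
Qed.

Lemma denom_bound s N : (1 <= N)%nat ->
  INR (N / S s) ^ S s <= INR (length (gowers_configs s N)).
Proof.
  intros HN. set (M0 := (N / S s)%nat).
  assert (HM : (S s * M0 <= N)%nat) by (apply Nat.Div0.mul_div_le; lia).
  unfold gowers_configs. rewrite length_filter_sumR, sumR_prod.
  set (ind := fun n h => if cube_in s N n h then 1 else 0).
  assert (Hind : forall n h, 0 <= ind n h) by (intros; unfold ind; destruct (cube_in s N n h); lra).
  apply Rle_trans with (sumR (zrange 0 M0) (fun n => sumR (zbox s 0 M0) (fun h => ind n h))).
  - rewrite (sumR_ext _ (fun n => sumR (zbox s 0 M0) (fun _ => 1))).
    + rewrite (sumR_const (zbox s 0 M0) 1), length_zbox, sumR_const, length_zrange, Rmult_1_r.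
      rewrite pow_INR. simpl pow. lra.
    + intros n Hn. apply sumR_ext. intros h Hh. apply In_zrange in Hn. apply In_zbox in Hh.
      destruct Hh as [Hl HF]. unfold ind. replace (cube_in s N n h) with true; auto.
      symmetry. unfold cube_in. apply forallb_forall. intros w Hw.
      assert (Hb := wdot_bounds w h (Z.of_nat M0 - 1) ltac:(eapply Forall_impl; [|exact HF]; cbv beta; intros; lia)).
      rewrite Hl in Hb. unfold in_interval. destr_bools; auto; nia.
  - apply Rle_trans with (sumR (zrange 0 M0) (fun n => sumR (zbox s (1 - Z.of_nat N) (2 * N - 1)) (fun h => ind n h))).
    + apply sumR_le. intros n _. apply sumR_zbox_le; auto; lia.
    + apply sumR_zrange_le; try lia. intros n. apply sumR_nonneg. intros x _. simpl. destruct (cube_in s N n x); lra.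
Qed.


Definition K0 (s' : nat) : R := (2 * 4 ^ S s' + 2 * 8 ^ S s') * (2 * INR (S (S s'))) ^ S (S s').

Lemma blk_pos s' : (1 <= blk s')%nat.
Proof. unfold blk. pose proof (Pn_ge2 s'). unfold Kb. nia. Qed.

Lemma avg_bound s' N : (2 * S (S s') <= N)%nat ->
  gowers_avg (S s') N rsZ <= K0 s' * (/ 2) ^ (Nat.log2 N / (2 * blk s')).
Proof.
  intros HN. set (s := S s'). set (b := blk s'). set (L := Nat.log2 N). set (j := (L / (2 * b))%nat).
  set (k := (j * b)%nat). set (P := (2 ^ k)%nat). set (A1 := (N / P + 1)%nat).
  assert (Hb : (1 <= b)%nat) by apply blk_pos.
  assert (HL := Nat.log2_spec N ltac:(lia)). fold L in HL.
  assert (H2k : (2 * k <= L)%nat).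
  { unfold k, j. pose proof (Nat.Div0.mul_div_le L (2 * b)). nia. }
  assert (HP1 : (1 <= P)%nat) by (unfold P; pose proof (Nat.pow_nonzero 2 k); lia).
  assert (HPP : (P * P <= N)%nat).
  { unfold P. rewrite <- Nat.pow_add_r. pose proof (Nat.pow_le_mono_r 2 (k + k) L ltac:(lia) ltac:(lia)). lia. }
  assert (HPA1 : (N <= P * A1)%nat).
  { unfold A1. pose proof (Nat.div_mod N P ltac:(lia)). pose proof (Nat.mod_upper_bound N P ltac:(lia)). nia. }
  assert (HPA2 : (P * A1 <= 2 * N)%nat).
  { unfold A1. pose proof (Nat.Div0.mul_div_le N P). nia. }
  assert (Hjk : (j <= k)%nat) by (unfold k; nia).
  unfold gowers_avg. rewrite numer_eq. rewrite (numer_big s N P A1) by lia.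
  set (bigH := zbox s (Z.of_nat P * - Z.of_nat A1) (P * (2 * A1))).
  set (S0 := sumR (zrange 0 (P * A1)) (fun n => sumR bigH (fun h => Tfun s N n h))).
  assert (HS : Rabs S0 <= (2 * 4 ^ s + 2 * 8 ^ s) * INR N ^ S s * (/2) ^ j).
  { assert (ES : S0 = sumR (zrange 0 (P * A1)) (fun n => sumR bigH (fun h => Afun s N k n h)) +
                      sumR (zrange 0 (P * A1)) (fun n => sumR bigH (fun h => Tfun s N n h - Afun s N k n h))).
    { unfold S0. rewrite <- sumR_plus. apply sumR_ext. intros n _. rewrite <- sumR_plus. apply sumR_ext. intros; ring. }
    rewrite ES. eapply Rle_trans; [apply Rabs_triang|].
    assert (Hmain := main_sum s N k A1 (2 ^ (S s * k) * (/ 2) ^ j)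
       (fun Φ HΦ => W_bound s' Φ HΦ j)).
    fold P bigH in Hmain.
    assert (Herr : Rabs (sumR (zrange 0 (P * A1)) (fun n => sumR bigH (fun h => Tfun s N n h - Afun s N k n h)))
                   <= 2 * (INR (length bigH) * (INR (2 ^ s) * IZR (two k)))).
    { eapply Rle_trans; [apply sumR_abs|]. eapply Rle_trans; [|apply (err_sum s N k 0 (P * A1) bigH)].
      apply sumR_le. intros n _. apply sumR_abs. }
    unfold bigH in Herr. rewrite length_zbox in Herr. rewrite two_nat in Herr. rewrite <- INR_IZR_INZ in Herr.
    fold P in Herr.
    rewrite !pow_INR in Hmain, Herr. rewrite mult_INR in Herr, Hmain. rewrite mult_INR in Herr.
    pose proof (real_num (INR N) (INR P) (INR A1) ((/2)^j) s j k) as R.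
    assert (Hfin : INR A1 * ((2 * INR A1) ^ s * (2 ^ (S s * k) * (/ 2) ^ j)) +
       2 * ((INR P * (2 * INR A1)) ^ s * (2 ^ s * INR P)) <= (2 * 4 ^ s + 2 * 8 ^ s) * INR N ^ S s * (/ 2) ^ j).
    { apply R.
      - replace 1 with (INR 1) by reflexivity. apply le_INR; lia.
      - rewrite <- mult_INR. apply le_INR; lia.
      - unfold P. rewrite pow_INR. simpl (INR 2). f_equal; try ring.
      - reflexivity.
      - exact Hjk.
      - apply pos_INR.
      - replace 2 with (INR 2) at 1 by reflexivity. rewrite <- !mult_INR. apply le_INR; lia. }
    simpl (INR 2) in Hmain, Herr. replace (1 + 1) with 2 in Hmain, Herr by ring.
    fold bigH in Herr.
    replace (INR (2 ^ s)) with (2 ^ s) in Herr by (rewrite pow_INR; replace (INR 2) with 2 by (simpl; ring); reflexivity).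
    lra. }
  apply (real_avg S0 (INR N) _ (INR (N / S s)) ((/2)^j) _ s); auto.
  - replace 2 with (INR 2) by reflexivity. rewrite <- mult_INR. apply le_INR. lia.
  - pose proof (Nat.div_mod N (S s) ltac:(lia)). pose proof (Nat.mod_upper_bound N (S s) ltac:(lia)).
    set (q := (N / S s)%nat) in *. set (r := (N mod S s)%nat) in *.
    assert (HNr : INR N = INR (S s) * INR q + INR r) by (rewrite <- mult_INR, <- plus_INR; f_equal; lia).
    assert (Hr : (r <= S s - 1)%nat) by lia. apply le_INR in Hr. rewrite minus_INR in Hr by lia.
    change (INR 1) with 1 in Hr.
    assert (Hc : 0 < INR (S s)) by (apply lt_0_INR; lia).
    rewrite HNr. unfold Rdiv. rewrite Rmult_plus_distr_r, (Rmult_comm (INR (S s))), Rmult_assoc, Rinv_r, Rmult_1_r by lra.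
    assert (INR r * / INR (S s) <= 1); [|lra].
    apply (Rmult_le_reg_l (INR (S s))); [lra|]. rewrite <- Rmult_assoc, (Rmult_comm _ (INR r)), Rmult_assoc, Rinv_r by lra. lra.
  - apply denom_bound. lia.
  - pose proof (denom_bound s N ltac:(lia)).
    assert (HM1 : (1 <= N / S s)%nat) by (apply Nat.div_str_pos; unfold s; lia).
    apply le_INR in HM1. change (INR 1) with 1 in HM1.
    pose proof (pow_R1_Rle _ (S s) HM1). lra.
  - pose proof (pow_le 4 (S s') ltac:(lra)). pose proof (pow_le 8 (S s') ltac:(lra)). lra.
  - apply pow_le. lra.
Qed.

Lemma exp_le' x y : x <= y -> exp x <= exp y.
Proof. intros [H|H]; [left; apply exp_increasing; auto|rewrite H; lra]. Qed.
Lemma ln_le' x y : 0 < x -> x <= y -> ln x <= ln y.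
Proof. intros Hx [H|H]; [left; apply ln_increasing; auto|rewrite H; lra]. Qed.

Lemma K0_pos s' : 0 < K0 s'.
Proof.
  unfold K0. apply Rmult_lt_0_compat.
  - pose proof (pow_lt 4 (S s') ltac:(lra)). pose proof (pow_lt 8 (S s') ltac:(lra)). lra.
  - apply pow_lt. pose proof (lt_0_INR (S (S s')) ltac:(lia)). lra.
Qed.

Theorem theoremB :
  forall s : nat, (1 <= s)%nat ->
  exists c : R, 0 < c /\
  exists (C : R) (N0 : nat),
    forall N : nat, (N0 <= N)%nat ->
      gowers_norm s N rsZ <= C * Rpower (INR N) (- c).
Proof.
  intros s Hs. destruct s as [|s']; [lia|].
  set (b := blk s'). set (e := / (2 ^ S s')).
  assert (He : 0 < e) by (unfold e; apply Rinv_0_lt_compat, pow_lt; lra).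
  assert (Hb : 0 < INR b) by (apply lt_0_INR; pose proof (blk_pos s'); unfold b; lia).
  assert (Hl2 : 0 < ln 2) by (pose proof ln_lt_2; lra).
  exists (e / (2 * INR b)). split; [apply Rdiv_lt_0_compat; lra|].
  exists (exp (e * ln (K0 s') + e * ln 2)). exists (2 * S (S s'))%nat.
  intros N HN.
  assert (HN1 : (1 <= N)%nat) by lia.
  assert (HNr : 0 < INR N) by (apply lt_0_INR; lia).
  unfold gowers_norm. destruct (Rle_dec (gowers_avg (S s') N rsZ) 0) as [Hle|Hgt].
  - unfold Rpower. pose proof (exp_pos (exp (e * ln (K0 s') + e * ln 2))).
    apply Rlt_le, Rmult_lt_0_compat; apply exp_pos.
  - apply Rnot_le_lt in Hgt. set (avg := gowers_avg (S s') N rsZ) in *.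
    set (L := Nat.log2 N). set (j := (L / (2 * b))%nat).
    assert (Havg := avg_bound s' N ltac:(lia)). fold avg L b j in Havg.
    unfold Rpower. rewrite <- exp_plus. apply exp_le'.
    fold e.
    assert (Hq : 0 < (/ 2) ^ j) by (apply pow_lt; lra).
    pose proof (K0_pos s').
    assert (H1 : ln avg <= ln (K0 s') - INR j * ln 2).
    { eapply Rle_trans; [apply ln_le'; [exact Hgt| exact Havg]|].
      rewrite ln_mult by lra. rewrite ln_pow by lra. rewrite ln_Rinv by lra. lra. }
    assert (HL := Nat.log2_spec N ltac:(lia)). fold L in HL.
    assert (H2 : ln (INR N) < INR (S L) * ln 2).
    { rewrite <- ln_pow by lra. apply ln_increasing; auto.
      assert (HH : INR N < INR (2 ^ S L)) by (apply lt_INR; lia).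
      rewrite pow_INR in HH. replace (INR 2) with 2 in HH by (simpl; ring). exact HH. }
    assert (H3 : (S L <= 2 * b * (j + 1))%nat).
    { unfold j. pose proof (Nat.div_mod L (2 * b) ltac:(pose proof (blk_pos s'); unfold b; lia)).
      pose proof (Nat.mod_upper_bound L (2 * b) ltac:(pose proof (blk_pos s'); unfold b; lia)). nia. }
    apply le_INR in H3. rewrite !mult_INR, plus_INR in H3. change (INR 2) with (1 + 1) in H3.
    change (INR 1) with 1 in H3.
    assert (H4 : e / (2 * INR b) * ln (INR N) <= e * (INR j * ln 2) + e * ln 2).
    { assert (H5 : ln (INR N) <= 2 * INR b * (INR j + 1) * ln 2) by nra.
      apply Rle_trans with (e / (2 * INR b) * (2 * INR b * (INR j + 1) * ln 2)).
      - apply Rmult_le_compat_l; [|exact H5]. apply Rlt_le, Rdiv_lt_0_compat; lra.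
      - right. field. lra. }
    assert (H6 : e * ln avg <= e * ln (K0 s') - e * (INR j * ln 2)).
    { replace (e * ln (K0 s') - e * (INR j * ln 2)) with (e * (ln (K0 s') - INR j * ln 2)) by ring.
      apply Rmult_le_compat_l; lra. }
    replace (- (e / (2 * INR b)) * ln (INR N)) with (- (e / (2 * INR b) * ln (INR N))) by ring.
    lra.
Qed.
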